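(* Let $\Omega\subset\mathbb{C}$ be a simply connected domain and let $(h,\mathcal{M},\mathcal{N})$ be a Weierstrass data of the second kind on $\Omega$. Then there exists a map $\mathbf{X}=(\mathbf{x}_1,\mathbf{x}_2,\mathbf{x}_3,\mathbf{x}_4):\Omega\to\mathbb{L}^4$ (unique up to an additive constant vector) with $$\mathbf{X}_z=\mathcal{M}_z\begin{bmatrix}1\\ -i\\ -h\\ h\end{bmatrix}+\mathcal{N}_z\begin{bmatrix}0\\ ih\\ \frac12(1+h^2)\\ \frac12(1-h^2)\end{bmatrix},$$ which is a conformal spacelike immersion parameterizing a marginally trapped surface in $\mathbb{L}^4$, with induced metric $$ds^2=4\left|\mathcal{M}_z-(\mathrm{Re}\,h)\,\mathcal{N}_z\right|^2|dz|^2 .$$ Moreover, up to additive constants, $\mathbf{x}_1=\mathcal{M}$ and $\mathbf{x}_3+\mathbf{x}_4=\mathcal{N}$.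
   Context: $\Omega\subset\mathbb{R}^2\equiv\mathbb{C}$ has complex coordinate $z=u+iv$, and $\partial_z=\frac12(\partial_u-i\partial_v)$, $\partial_{\overline z}=\frac12(\partial_u+i\partial_v)$; subscripts denote partial derivatives. $\mathbb{L}^4$ is $\mathbb{R}^4$ with the Lorentzian metric $\langle x,y\rangle=x_1y_1+x_2y_2+x_3y_3-x_4y_4$; this form is extended complex-bilinearly to $\mathbb{C}^4$. A map $\mathbf{X}:\Omega\to\mathbb{L}^4$ is a conformal spacelike immersion with metric $\Lambda|dz|^2=\Lambda(du^2+dv^2)$, $\Lambda>0$, iff $\langle\mathbf{X}_z,\mathbf{X}_z\rangle=0$ and $\Lambda=2\langle\mathbf{X}_z,\overline{\mathbf{X}_z}\rangle>0$. Its mean curvature vector is $\mathbf{H}=\Delta_{ds^2}\mathbf{X}=\frac{4}{\Lambda}\mathbf{X}_{z\overline z}$. A spacelike surface is marginally trapped if $\langle\mathbf{H},\mathbf{H}\rangle=0$. A Weierstrass data of the second kind on $\Omega$ is a triple $(h,\mathcal{M},\mathcal{N})$ where $h:\Omega\to\mathbb{C}\setminus\{0\}$ and $\mathcal{M},\mathcal{N}:\Omega\to\mathbb{R}$ are $\mathcal{C}^2$, satisfying $h_{\overline z}=0$, $\mathcal{M}_{z\overline z}=(\mathrm{Re}\,h)\,\mathcal{N}_{z\overline z}$, and $\mathcal{M}_z-(\mathrm{Re}\,h)\,\mathcal{N}_z\neq0$ at every point of $\Omega$. *)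

(* Defs.v *)
From Stdlib Require Import Reals.
From Coquelicot Require Import Coquelicot.
Open Scope R_scope.

(* Points of Omega ⊂ R^2 ≅ C are pairs (u,v), z = u + i v. *)
Definition pt := (R * R)%type.

(* A continuous path / loop: gamma : R -> pt continuous (its restriction to
   [0,1] is the path; every continuous path on [0,1] extends by constants). *)
Definition path_in (Om : pt -> Prop) (g : R -> pt) : Prop :=
  (forall t, continuous g t) /\ (forall t, 0 <= t <= 1 -> Om (g t)).

Definition path_connected (Om : pt -> Prop) : Prop :=
  (exists p, Om p) /\
  forall p q, Om p -> Om q ->
    exists g, path_in Om g /\ g 0 = p /\ g 1 = q.

Definition loop_null_homotopic (Om : pt -> Prop) (g : R -> pt) : Prop :=
  exists H : pt -> pt,
    (forall x, continuous H x) /\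
    (forall t s, 0 <= t <= 1 -> 0 <= s <= 1 -> Om (H (t, s))) /\
    (forall t, H (t, 0) = g t) /\
    (forall t, H (t, 1) = g 0) /\
    (forall s, H (0, s) = g 0) /\
    (forall s, H (1, s) = g 0).

Definition simply_connected (Om : pt -> Prop) : Prop :=
  path_connected Om /\
  forall g, path_in Om g -> g 1 = g 0 -> loop_null_homotopic Om g.

Definition simply_connected_domain (Om : pt -> Prop) : Prop :=
  open Om /\ simply_connected Om.

Definition du (f : pt -> R) (p : pt) : R := Derive (fun t => f (t, snd p)) (fst p).
Definition dv (f : pt -> R) (p : pt) : R := Derive (fun t => f (fst p, t)) (snd p).

Definition has_partials_on (Om : pt -> Prop) (f : pt -> R) : Prop :=
  forall p, Om p ->
    ex_derive (fun t => f (t, snd p)) (fst p) /\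
    ex_derive (fun t => f (fst p, t)) (snd p).

Definition C1_on (Om : pt -> Prop) (f : pt -> R) : Prop :=
  has_partials_on Om f /\
  forall p, Om p -> continuous f p /\ continuous (du f) p /\ continuous (dv f) p.

Definition C2_on (Om : pt -> Prop) (f : pt -> R) : Prop :=
  C1_on Om f /\ C1_on Om (du f) /\ C1_on Om (dv f).

Definition cdu (F : pt -> C) (p : pt) : C :=
  (du (fun q => Re (F q)) p, du (fun q => Im (F q)) p).
Definition cdv (F : pt -> C) (p : pt) : C :=
  (dv (fun q => Re (F q)) p, dv (fun q => Im (F q)) p).

Definition dz (F : pt -> C) (p : pt) : C :=
  Cmult (RtoC (/2)) (Cminus (cdu F p) (Cmult Ci (cdv F p))).
Definition dzb (F : pt -> C) (p : pt) : C :=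
  Cmult (RtoC (/2)) (Cplus (cdu F p) (Cmult Ci (cdv F p))).

Definition rc (f : pt -> R) : pt -> C := fun p => RtoC (f p).

Definition CC2_on (Om : pt -> Prop) (F : pt -> C) : Prop :=
  C2_on Om (fun q => Re (F q)) /\ C2_on Om (fun q => Im (F q)).

Definition weierstrass_data_2 (Om : pt -> Prop) (h : pt -> C) (M N : pt -> R) : Prop :=
  CC2_on Om h /\ C2_on Om M /\ C2_on Om N /\
  (forall p, Om p -> h p <> RtoC 0) /\
  (forall p, Om p -> dzb h p = RtoC 0) /\
  (forall p, Om p ->
     dzb (dz (rc M)) p = Cmult (RtoC (Re (h p))) (dzb (dz (rc N)) p)) /\
  (forall p, Om p ->
     Cminus (dz (rc M) p) (Cmult (RtoC (Re (h p))) (dz (rc N) p)) <> RtoC 0).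

Definition C4 := (C * C * C * C)%type.

Definition lor (a b : C4) : C :=
  match a, b with
  | (a1, a2, a3, a4), (b1, b2, b3, b4) =>
      Cminus (Cplus (Cplus (Cmult a1 b1) (Cmult a2 b2)) (Cmult a3 b3)) (Cmult a4 b4)
  end.

Definition conj4 (a : C4) : C4 :=
  match a with (a1, a2, a3, a4) => (Cconj a1, Cconj a2, Cconj a3, Cconj a4) end.

Definition cscale4 (c : C) (a : C4) : C4 :=
  match a with (a1, a2, a3, a4) => (Cmult c a1, Cmult c a2, Cmult c a3, Cmult c a4) end.

Definition cadd4 (a b : C4) : C4 :=
  match a, b with
  | (a1, a2, a3, a4), (b1, b2, b3, b4) => (Cplus a1 b1, Cplus a2 b2, Cplus a3 b3, Cplus a4 b4)
  end.

Definition Xz (x1 x2 x3 x4 : pt -> R) (p : pt) : C4 :=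
  (dz (rc x1) p, dz (rc x2) p, dz (rc x3) p, dz (rc x4) p).
Definition Xzzb (x1 x2 x3 x4 : pt -> R) (p : pt) : C4 :=
  (dzb (dz (rc x1)) p, dzb (dz (rc x2)) p, dzb (dz (rc x3)) p, dzb (dz (rc x4)) p).

(* conformal factor Λ = 2 <X_z, conj X_z> (real part; it is real) *)
Definition Lambda (x1 x2 x3 x4 : pt -> R) (p : pt) : R :=
  2 * Re (lor (Xz x1 x2 x3 x4 p) (conj4 (Xz x1 x2 x3 x4 p))).

Definition conformal_spacelike_immersion (Om : pt -> Prop) (x1 x2 x3 x4 : pt -> R) : Prop :=
  C2_on Om x1 /\ C2_on Om x2 /\ C2_on Om x3 /\ C2_on Om x4 /\
  forall p, Om p ->
    lor (Xz x1 x2 x3 x4 p) (Xz x1 x2 x3 x4 p) = RtoC 0 /\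
    Im (lor (Xz x1 x2 x3 x4 p) (conj4 (Xz x1 x2 x3 x4 p))) = 0 /\
    Lambda x1 x2 x3 x4 p > 0.

Definition Hmean (x1 x2 x3 x4 : pt -> R) (p : pt) : C4 :=
  cscale4 (RtoC (4 / Lambda x1 x2 x3 x4 p)) (Xzzb x1 x2 x3 x4 p).

Definition marginally_trapped (Om : pt -> Prop) (x1 x2 x3 x4 : pt -> R) : Prop :=
  forall p, Om p -> lor (Hmean x1 x2 x3 x4 p) (Hmean x1 x2 x3 x4 p) = RtoC 0.

Definition WRep (h : pt -> C) (M N : pt -> R) (p : pt) : C4 :=
  let hp := h p in
  cadd4
    (cscale4 (dz (rc M) p) (RtoC 1, Copp Ci, Copp hp, hp))
    (cscale4 (dz (rc N) p)
       (RtoC 0, Cmult Ci hp,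
        Cmult (RtoC (/2)) (Cplus (RtoC 1) (Cmult hp hp)),
        Cmult (RtoC (/2)) (Cminus (RtoC 1) (Cmult hp hp)))).

(* Main.v *)
Require Import Defs.
From Stdlib Require Import Reals.
From Coquelicot Require Import Coquelicot.
From Stdlib Require Import Lra Psatz ClassicalEpsilon Classical.
Open Scope R_scope.

Definition sq (c : pt) (r : R) (q : pt) : Prop :=
  Rabs (fst q - fst c) < r /\ Rabs (snd q - snd c) < r.

Lemma ball_R (x y e : R) : ball x e y <-> Rabs (y - x) < e.
Proof. split; intro H; exact H. Qed.

Lemma locally_pt_sq (p : pt) (P : pt -> Prop) :
  locally p P <-> exists r, r > 0 /\ forall q, sq p r q -> P q.
Proof.
  split.
  - intros [e He]. exists e. split. apply cond_pos.
    intros q [H1 H2]. apply He. split; apply ball_R; assumption.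
  - intros [r [Hr H]]. exists (mkposreal r Hr). intros q [H1 H2].
    apply H. split; apply ball_R; assumption.
Qed.

Lemma open_sq (Om : pt -> Prop) p : open Om -> Om p -> exists r, r > 0 /\ forall q, sq p r q -> Om q.
Proof. intros HO Hp. apply locally_pt_sq. apply HO, Hp. Qed.

Lemma sq_locally c r q : sq c r q -> locally q (sq c r).
Proof.
  intros [H1 H2]. apply locally_pt_sq.
  exists (Rmin (r - Rabs (fst q - fst c)) (r - Rabs (snd q - snd c))).
  split. apply Rmin_pos; lra.
  intros q' [H3 H4].
  pose proof (Rmin_l (r - Rabs (fst q - fst c)) (r - Rabs (snd q - snd c))).
  pose proof (Rmin_r (r - Rabs (fst q - fst c)) (r - Rabs (snd q - snd c))).
  split.
  - replace (fst q' - fst c) with ((fst q' - fst q) + (fst q - fst c)) by ring.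
    eapply Rle_lt_trans. apply Rabs_triang. lra.
  - replace (snd q' - snd c) with ((snd q' - snd q) + (snd q - snd c)) by ring.
    eapply Rle_lt_trans. apply Rabs_triang. lra.
Qed.

Lemma locally_u (P : pt -> Prop) (p : pt) : locally p P -> locally (fst p) (fun t => P (t, snd p)).
Proof.
  intros H. apply locally_pt_sq in H. destruct H as [r [Hr H]].
  exists (mkposreal r Hr). intros t Ht. apply H. split; simpl.
  apply ball_R in Ht. exact Ht. rewrite Rminus_eq_0, Rabs_R0. exact Hr.
Qed.
Lemma locally_v (P : pt -> Prop) (p : pt) : locally p P -> locally (snd p) (fun t => P (fst p, t)).
Proof.
  intros H. apply locally_pt_sq in H. destruct H as [r [Hr H]].
  exists (mkposreal r Hr). intros t Ht. apply H. split; simpl.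
  rewrite Rminus_eq_0, Rabs_R0. exact Hr. apply ball_R in Ht. exact Ht.
Qed.

Definition eqOn (Om : pt -> Prop) (f g : pt -> R) := forall p, Om p -> f p = g p.

Lemma eqOn_du Om f g : open Om -> eqOn Om f g -> eqOn Om (du f) (du g).
Proof.
  intros HO He p Hp. unfold du. apply Derive_ext_loc.
  apply (locally_u (fun q => f q = g q)). apply (filter_imp Om). intros; apply He; auto. apply HO, Hp.
Qed.
Lemma eqOn_dv Om f g : open Om -> eqOn Om f g -> eqOn Om (dv f) (dv g).
Proof.
  intros HO He p Hp. unfold dv. apply Derive_ext_loc.
  apply (locally_v (fun q => f q = g q)). apply (filter_imp Om). intros; apply He; auto. apply HO, Hp.
Qed.

Lemma continuous_eqOn Om f g p : open Om -> eqOn Om f g -> Om p -> continuous f p -> continuous g p.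
Proof.
  intros HO He Hp Hc. apply (continuous_ext_loc g f p).
  apply (filter_imp Om). intros; apply He; auto. apply HO, Hp. exact Hc.
Qed.


Lemma continuous_pair {U : UniformSpace} (f g : U -> R) x :
  continuous f x -> continuous g x -> continuous (fun y => (f y, g y) : pt) x.
Proof.
  intros Hf Hg. unfold continuous. apply filterlim_locally. intros eps.
  apply (proj1 (filterlim_locally _ _)) with (eps := eps) in Hf.
  apply (proj1 (filterlim_locally _ _)) with (eps := eps) in Hg.
  generalize (filter_and _ _ Hf Hg). apply filter_imp. intros y [H1 H2]. split; assumption.
Qed.

Lemma cont_line_u (f : pt -> R) (p : pt) : continuous f p -> continuous (fun t => f (t, snd p)) (fst p).
Proof.
  intros H. apply (continuous_comp (fun t : R => (t, snd p) : pt) f).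
  apply continuous_pair. apply continuous_id. apply continuous_const.
  destruct p; exact H.
Qed.
Lemma cont_line_v (f : pt -> R) (p : pt) : continuous f p -> continuous (fun t => f (fst p, t)) (snd p).
Proof.
  intros H. apply (continuous_comp (fun t : R => (fst p, t) : pt) f).
  apply continuous_pair. apply continuous_const. apply continuous_id.
  destruct p; exact H.
Qed.

Lemma cont_2d (f : pt -> R) x y : continuous f (x, y) -> continuity_2d_pt (fun u v => f (u, v)) x y.
Proof.
  intros H. apply continuity_2d_pt_filterlim.
  eapply filterlim_ext. 2: exact H. intros [a b]; reflexivity.
Qed.

Lemma const_seg (g : R -> R) a b :
  (forall t, Rmin a b <= t <= Rmax a b -> is_derive g t 0) -> g a = g b.
Proof.
  intros H. destruct (MVT_gen g a b (fun _ => 0)) as [c [_ Hc]].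
  - intros x Hx. apply H. lra.
  - intros x Hx. apply continuity_pt_filterlim. apply (ex_derive_continuous g x).
    eexists. apply H. exact Hx.
  - lra.
Qed.

Lemma bound_seg (g dg : R -> R) a b B :
  (forall t, Rmin a b <= t <= Rmax a b -> is_derive g t (dg t) /\ Rabs (dg t) <= B) ->
  Rabs (g b - g a) <= B * Rabs (b - a).
Proof.
  intros H. destruct (MVT_gen g a b dg) as [c [Hc1 Hc]].
  - intros x Hx. apply H. lra.
  - intros x Hx. apply continuity_pt_filterlim. apply (ex_derive_continuous g x).
    eexists. apply H. exact Hx.
  - rewrite Hc, Rabs_mult. apply Rmult_le_compat_r. apply Rabs_pos. apply H. exact Hc1.
Qed.

Lemma Rmin_Rmax_abs a b t : Rmin a b <= t <= Rmax a b -> Rabs (t - a) <= Rabs (b - a).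
Proof.
  intros [H1 H2]. unfold Rmin, Rmax in *. destruct (Rle_dec a b);
  unfold Rabs; repeat destruct Rcase_abs; lra.
Qed.

Lemma cont_bound (P : pt -> R) p : continuous P p -> exists r, r > 0 /\ forall q, sq p r q -> Rabs (P q) <= Rabs (P p) + 1.
Proof.
  intros H. apply locally_pt_sq.
  apply (proj1 (filterlim_locally _ _)) with (eps := mkposreal 1 Rlt_0_1) in H.
  revert H. apply filter_imp. intros q Hq. change (Rabs (P q - P p) < 1) in Hq.
  replace (P q) with (P p + (P q - P p)) by ring.
  eapply Rle_trans. apply Rabs_triang. lra.
Qed.

Lemma cont_from_partials (f P Q : pt -> R) p r :
  r > 0 -> (forall q, sq p r q -> is_derive (fun t => f (t, snd q)) (fst q) (P q) /\
                                 is_derive (fun t => f (fst q, t)) (snd q) (Q q)) ->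
  continuous P p -> continuous Q p -> continuous f p.
Proof.
  intros Hr HD HP HQ.
  destruct (cont_bound P p HP) as [r1 [Hr1 H1]].
  destruct (cont_bound Q p HQ) as [r2 [Hr2 H2]].
  set (B := Rabs (P p) + 1 + Rabs (Q p) + 1).
  assert (HB : B > 0) by (unfold B; pose proof (Rabs_pos (P p)); pose proof (Rabs_pos (Q p)); lra).
  set (r0 := Rmin r (Rmin r1 r2)).
  assert (Hr0 : r0 > 0) by (unfold r0; repeat apply Rmin_pos; lra).
  assert (Hr0a : r0 <= r) by apply Rmin_l.
  assert (Hr0b : r0 <= r1) by (eapply Rle_trans; [apply Rmin_r|apply Rmin_l]).
  assert (Hr0c : r0 <= r2) by (eapply Rle_trans; [apply Rmin_r|apply Rmin_r]).
  unfold continuous. apply filterlim_locally. intros eps.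
  apply locally_pt_sq. exists (Rmin r0 (eps / (2 * B))). split.
  apply Rmin_pos. lra. apply Rdiv_lt_0_compat. apply cond_pos. lra.
  intros q [Hq1 Hq2]. apply ball_R.
  pose proof (Rmin_l r0 (eps / (2 * B))) as Hm1.
  pose proof (Rmin_r r0 (eps / (2 * B))) as Hm2.
  destruct p as [p1 p2], q as [q1 q2]; simpl in *.
  assert (E1 : Rabs (f (q1, q2) - f (p1, q2)) <= B * Rabs (q1 - p1)).
  { apply (bound_seg (fun t => f (t, q2)) (fun t => P (t, q2))).
    intros t Ht. pose proof (Rmin_Rmax_abs _ _ _ Ht).
    assert (sq (p1, p2) r0 (t, q2)) by (split; simpl; lra).
    split. apply (HD (t, q2)). destruct H0; split; lra.
    eapply Rle_trans. apply H1. destruct H0; split; lra. unfold B.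
    pose proof (Rabs_pos (Q (p1,p2))). lra. }
  assert (E2 : Rabs (f (p1, q2) - f (p1, p2)) <= B * Rabs (q2 - p2)).
  { apply (bound_seg (fun t => f (p1, t)) (fun t => Q (p1, t))).
    intros t Ht. pose proof (Rmin_Rmax_abs _ _ _ Ht).
    assert (sq (p1, p2) r0 (p1, t)) by (split; simpl; [rewrite Rminus_eq_0, Rabs_R0|]; lra).
    split. apply (HD (p1, t)). destruct H0; split; lra.
    eapply Rle_trans. apply H2. destruct H0; split; lra. unfold B.
    pose proof (Rabs_pos (P (p1,p2))). lra. }
  replace (f (q1, q2) - f (p1, p2)) with ((f (q1, q2) - f (p1, q2)) + (f (p1, q2) - f (p1, p2))) by ring.
  eapply Rle_lt_trans. apply Rabs_triang.
  assert (B * Rabs (q1 - p1) + B * Rabs (q2 - p2) < eps).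
  { assert (B * (eps / (2 * B)) = eps / 2) by (field; lra).
    assert (B * Rabs (q1 - p1) < eps / 2) by (rewrite <- H; apply Rmult_lt_compat_l; lra).
    assert (B * Rabs (q2 - p2) < eps / 2) by (rewrite <- H; apply Rmult_lt_compat_l; lra).
    lra. }
  lra.
Qed.
Lemma isd_const (c x : R) : is_derive (fun _ : R => c) x 0.
Proof. apply (@is_derive_const R_AbsRing R_NormedModule). Qed.
Lemma isd_plus (f g : R -> R) x df dg : is_derive f x df -> is_derive g x dg -> is_derive (fun t => f t + g t) x (df + dg).
Proof. intros H1 H2. apply (is_derive_plus f g x df dg H1 H2). Qed.
Lemma isd_minus (f g : R -> R) x df dg : is_derive f x df -> is_derive g x dg -> is_derive (fun t => f t - g t) x (df - dg).
Proof. intros H1 H2. apply (is_derive_minus f g x df dg H1 H2). Qed.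
Lemma isd_mult (f g : R -> R) x df dg : is_derive f x df -> is_derive g x dg -> is_derive (fun t => f t * g t) x (df * g x + f x * dg).
Proof. intros H1 H2. apply (is_derive_mult f g x df dg H1 H2). intros; apply Rmult_comm. Qed.
Lemma isd_opp (f : R -> R) x df : is_derive f x df -> is_derive (fun t => - f t) x (- df).
Proof. intros H1. apply (is_derive_opp f x df H1). Qed.
Lemma isd_scal (f : R -> R) k x df : is_derive f x df -> is_derive (fun t => k * f t) x (k * df).
Proof. apply is_derive_scal. Qed.
Lemma isd_ext (f g : R -> R) x l l' : (forall t, f t = g t) -> l = l' -> is_derive f x l -> is_derive g x l'.
Proof. intros H E D. subst l'. apply (is_derive_ext f g x l H D). Qed.

Lemma between_abs a b t c r : Rmin a b <= t <= Rmax a b -> Rabs (a - c) < r -> Rabs (b - c) < r -> Rabs (t - c) < r.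
Proof.
  intros [H1 H2] Ha Hb. unfold Rmin, Rmax in *. destruct (Rle_dec a b);
  revert Ha Hb; unfold Rabs; repeat destruct Rcase_abs; lra.
Qed.

Lemma zero_two_sq (g : pt -> R) c r c' r' a b :
  (forall q, sq c r q -> sq c' r' q ->
     is_derive (fun t => g (t, snd q)) (fst q) 0 /\ is_derive (fun t => g (fst q, t)) (snd q) 0) ->
  sq c r a -> sq c r b -> sq c' r' a -> sq c' r' b -> g a = g b.
Proof.
  intros H [Ha1 Ha2] [Hb1 Hb2] [Ha1' Ha2'] [Hb1' Hb2'].
  destruct a as [a1 a2], b as [b1 b2]; simpl in *.
  transitivity (g (b1, a2)).
  - apply (const_seg (fun t => g (t, a2)) a1 b1). intros t Ht.
    apply (H (t, a2)); split; simpl; auto; eapply between_abs; eauto.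
  - apply (const_seg (fun t => g (b1, t)) a2 b2). intros t Ht.
    apply (H (b1, t)); split; simpl; auto; eapply between_abs; eauto.
Qed.

Lemma frac_le1 a n : 0 < n -> a <= n -> a / n <= 1.
Proof. intros H1 H2. unfold Rdiv. apply (Rmult_le_reg_r n); auto.
  rewrite Rmult_assoc, Rinv_l, Rmult_1_r, Rmult_1_l; lra. Qed.

Definition cell (n i j : nat) (t s : R) : Prop :=
  INR i / INR n <= t <= INR (S i) / INR n /\ INR j / INR n <= s <= INR (S j) / INR n.

Lemma lebesgue (Om : pt -> Prop) (G : pt -> R -> Prop) (H : pt -> pt) :
  (forall c, Om c -> exists r, r > 0 /\ G c r) ->
  (forall z, continuous H z) ->
  (forall t s, 0 <= t <= 1 -> 0 <= s <= 1 -> Om (H (t, s))) ->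
  exists n, (n > 0)%nat /\ forall i j, (i < n)%nat -> (j < n)%nat ->
    exists c r, G c r /\ forall t s, cell n i j t s -> sq c r (H (t, s)).
Proof.
  intros HG HC HOm.
  assert (Hex : forall u v : R, exists d : posreal, (0 <= u <= 1 -> 0 <= v <= 1 ->
     exists c r, G c r /\ forall t s, Rabs (t - u) < d -> Rabs (s - v) < d -> sq c r (H (t, s)))).
  { intros u v. destruct (classic (0 <= u <= 1 /\ 0 <= v <= 1)) as [[Hu Hv]|Hn].
    - destruct (HG (H (u, v)) (HOm u v Hu Hv)) as [r [Hr HGr]].
      assert (L : locally (u, v) (fun z => sq (H (u, v)) r (H z))).
      { apply (HC (u, v)). apply sq_locally. split; rewrite Rminus_eq_0, Rabs_R0; lra. }
      apply locally_pt_sq in L. destruct L as [d [Hd L]].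
      exists (mkposreal d Hd). intros _ _. exists (H (u, v)), r. split; auto.
      intros t s Ht Hs. apply (L (t, s)). split; simpl; auto.
    - exists (mkposreal 1 Rlt_0_1). intros Hu Hv. exfalso; auto. }
  set (delta := fun u v => proj1_sig (constructive_indefinite_description _ (Hex u v))).
  assert (Hdelta : forall u v, 0 <= u <= 1 -> 0 <= v <= 1 ->
     exists c r, G c r /\ forall t s, Rabs (t - u) < delta u v -> Rabs (s - v) < delta u v -> sq c r (H (t, s))).
  { intros u v. unfold delta. destruct (constructive_indefinite_description _ (Hex u v)). simpl. auto. }
  destruct (compactness_value_2d 0 1 0 1 (fun u v => pos_div_2 (delta u v))) as [d Hd].
  destruct (archimed_cor1 d (cond_pos d)) as [n [Hn1 Hn2]].
  exists n. split. lia. intros i j Hi Hj.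
  assert (HnR : 0 < INR n) by (apply lt_0_INR; lia).
  assert (Hi' : INR i + 1 <= INR n) by (rewrite <- S_INR; apply le_INR; lia).
  assert (Hj' : INR j + 1 <= INR n) by (rewrite <- S_INR; apply le_INR; lia).
  assert (Hi0 : 0 <= INR i) by apply pos_INR.
  assert (Hj0 : 0 <= INR j) by apply pos_INR.
  assert (Hx : 0 <= INR i / INR n <= 1).
  { split. apply Rdiv_le_0_compat; lra. apply frac_le1; lra. }
  assert (Hy : 0 <= INR j / INR n <= 1).
  { split. apply Rdiv_le_0_compat; lra. apply frac_le1; lra. }
  specialize (Hd _ _ Hx Hy).
  apply NNPP. intro Hno. apply Hd. intros [u [v [Hu [Hv [H1 [H2 H3]]]]]].
  apply Hno. simpl in H1, H2, H3.
  destruct (Hdelta u v Hu Hv) as [c [r [HGcr Hcr]]].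
  exists c, r. split; auto. intros t s [Ht Hs]. apply Hcr.
  - rewrite S_INR in Ht.
    assert (E : (INR i + 1) / INR n = INR i / INR n + / INR n) by (field; lra).
    rewrite E in Ht.
    replace (t - u) with ((t - INR i / INR n) + (INR i / INR n - u)) by ring.
    eapply Rle_lt_trans. apply Rabs_triang.
    rewrite (Rabs_right (t - INR i / INR n)) by lra. lra.
  - rewrite S_INR in Hs.
    assert (E : (INR j + 1) / INR n = INR j / INR n + / INR n) by (field; lra).
    rewrite E in Hs.
    replace (s - v) with ((s - INR j / INR n) + (INR j / INR n - v)) by ring.
    eapply Rle_lt_trans. apply Rabs_triang.
    rewrite (Rabs_right (s - INR j / INR n)) by lra. lra.
Qed.

Fixpoint ssum (F : nat -> R) (n : nat) : R :=
  match n with O => 0 | S m => ssum F m + F m end.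

Lemma ssum_ext F G n : (forall k, (k < n)%nat -> F k = G k) -> ssum F n = ssum G n.
Proof. induction n; simpl; intros H; auto. rewrite IHn, H; auto; lia. Qed.

Lemma ssum_add F a b : ssum F (a + b) = ssum F a + ssum (fun j => F (a + j)%nat) b.
Proof. induction b; simpl. rewrite Nat.add_0_r; ring. rewrite Nat.add_succ_r. simpl. rewrite IHb. ring. Qed.

Lemma ssum_block F n m : ssum F (n * m) = ssum (fun i => ssum (fun j => F (i * m + j)%nat) m) n.
Proof. induction n; simpl; auto. rewrite Nat.add_comm, ssum_add, IHn. reflexivity. Qed.

Lemma ssum_minus F G n : ssum (fun k => F k - G k) n = ssum F n - ssum G n.
Proof. induction n; simpl; [ring|rewrite IHn; ring]. Qed.

Lemma ssum_opp F n : ssum (fun k => - F k) n = - ssum F n.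
Proof. induction n; simpl; [ring|rewrite IHn; ring]. Qed.

Lemma ssum_zero F n : (forall k, (k < n)%nat -> F k = 0) -> ssum F n = 0.
Proof. intros H. rewrite (ssum_ext F (fun _ => 0)); auto. induction n; simpl; auto. rewrite IHn; auto. ring. Qed.

Lemma ssum_tele (V : nat -> R) n : ssum (fun k => V (S k) - V k) n = V n - V O.
Proof. induction n; simpl. ring. rewrite IHn. ring. Qed.

Lemma ssum_shift F n : ssum F (S n) = F O + ssum (fun k => F (S k)) n.
Proof. induction n. simpl. ring. change (ssum F (S (S n))) with (ssum F (S n) + F (S n)). rewrite IHn. simpl. ring. Qed.

Lemma ssum_rev F n : ssum (fun k => F (n - S k)%nat) n = ssum F n.
Proof.
  induction n. reflexivity.
  rewrite ssum_shift. replace (S n - 1)%nat with n by lia.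
  rewrite (ssum_ext (fun k => F (S n - S (S k))%nat) (fun k => F (n - S k)%nat)) by (intros; f_equal; lia).
  rewrite IHn. simpl. ring.
Qed.

Section Mono.
Variable Om : pt -> Prop.
Variables P Q : pt -> R.

Definition goodf (c : pt) (r : R) (f : pt -> R) : Prop :=
  r > 0 /\ forall q, sq c r q -> Om q /\
    is_derive (fun t => f (t, snd q)) (fst q) (P q) /\ is_derive (fun t => f (fst q, t)) (snd q) (Q q).

Definition incr (a b : pt) : R :=
  match excluded_middle_informative (exists v, exists c r f, goodf c r f /\ sq c r a /\ sq c r b /\ v = f b - f a) with
  | left H => proj1_sig (constructive_indefinite_description _ H)
  | right _ => 0
  end.

Lemma incr_spec c r f a b : goodf c r f -> sq c r a -> sq c r b -> incr a b = f b - f a.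
Proof.
  intros Hg Ha Hb. unfold incr. destruct excluded_middle_informative as [H|H].
  - destruct (constructive_indefinite_description _ H) as [v [c' [r' [f' [Hg' [Ha' [Hb' Hv]]]]]]].
    simpl. subst v.
    assert (E : (fun q => f' q - f q) a = (fun q => f' q - f q) b).
    { apply (zero_two_sq (fun q => f' q - f q) c r c' r'); auto.
      intros q Hq Hq'. destruct (proj2 Hg q Hq) as [_ [H1 H2]]. destruct (proj2 Hg' q Hq') as [_ [H1' H2']].
      split.
      - pose proof (is_derive_minus _ _ _ _ _ H1' H1) as K. rewrite minus_eq_zero in K. exact K.
      - pose proof (is_derive_minus _ _ _ _ _ H2' H2) as K. rewrite minus_eq_zero in K. exact K. }
    simpl in E. lra.
  - exfalso. apply H. exists (f b - f a), c, r, f. auto.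
Qed.

Definition fine (g : R -> pt) (n : nat) : Prop :=
  (n > 0)%nat /\ forall k, (k < n)%nat -> exists c r f, goodf c r f /\
    forall t, INR k / INR n <= t <= INR (S k) / INR n -> sq c r (g t).

Definition Spath (g : R -> pt) (n : nat) : R :=
  ssum (fun k => incr (g (INR k / INR n)) (g (INR (S k) / INR n))) n.



Lemma frac_between (a k n m : nat) : (n > 0)%nat -> (m > 0)%nat -> (a * m <= k <= S a * m)%nat ->
  INR a / INR n <= INR k / INR (n * m) <= INR (S a) / INR n.
Proof.
  intros Hn Hm [H1 H2].
  assert (Hn' : 0 < INR n) by (apply lt_0_INR; lia).
  assert (Hm' : 0 < INR m) by (apply lt_0_INR; lia).
  apply le_INR in H1. apply le_INR in H2. rewrite mult_INR in *.
  split.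
  - replace (INR a / INR n) with (INR a * INR m / (INR n * INR m)) by (field; lra).
    unfold Rdiv. apply Rmult_le_compat_r. left; apply Rinv_0_lt_compat; nra. lra.
  - replace (INR (S a) / INR n) with (INR (S a) * INR m / (INR n * INR m)) by (field; lra).
    unfold Rdiv. apply Rmult_le_compat_r. left; apply Rinv_0_lt_compat; nra. lra.
Qed.

Hypothesis LocEx : forall c, Om c -> exists r f, goodf c r f.

Lemma cont_fst_g (g : R -> pt) z : (forall t, continuous g t) -> continuous (fun z : pt => g (fst z)) z.
Proof.
  intros Hg. apply (continuous_comp (fun z : pt => fst z) g). destruct z; apply continuous_fst. apply Hg.
Qed.

Lemma fine_exists g : (forall t, continuous g t) -> (forall t, 0 <= t <= 1 -> Om (g t)) -> exists n, fine g n.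
Proof.
  intros Hc HOm.
  destruct (lebesgue Om (fun c r => exists f, goodf c r f) (fun z => g (fst z))) as [n [Hn H]].
  - intros c Hc'. destruct (LocEx c Hc') as [r [f Hf]]. exists r. split. apply Hf. eauto.
  - intros z. apply cont_fst_g. exact Hc.
  - intros t s Ht Hs. apply HOm. exact Ht.
  - exists n. split. exact Hn. intros k Hk. destruct (H k O Hk ltac:(lia)) as [c [r [[f Hf] Hs]]].
    exists c, r, f. split. exact Hf. intros t Ht. apply (Hs t 0). split. exact Ht.
    assert (0 < INR n) by (apply lt_0_INR; lia).
    simpl. split. unfold Rdiv. rewrite Rmult_0_l. lra. apply Rlt_le, Rdiv_lt_0_compat; lra.
Qed.

Lemma fine_refine g n m : fine g n -> (m > 0)%nat -> fine g (n * m) /\ Spath g (n * m) = Spath g n.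
Proof.
  intros [Hn H] Hm. split.
  - split. nia. intros k Hk.
    set (a := (k / m)%nat).
    assert (Hk1 : (a * m <= k)%nat) by (unfold a; rewrite Nat.mul_comm; apply Nat.Div0.mul_div_le; lia).
    assert (Hk2 : (S k <= S a * m)%nat).
    { unfold a. pose proof (Nat.div_mod k m ltac:(lia)). pose proof (Nat.mod_upper_bound k m ltac:(lia)). simpl. nia. }
    assert (Ha : (a < n)%nat).
    { unfold a. apply Nat.Div0.div_lt_upper_bound. nia. }
    destruct (H a Ha) as [c [r [f [Hf Hs]]]]. exists c, r, f. split; auto.
    intros t Ht. apply Hs.
    pose proof (frac_between a k n m Hn Hm ltac:(lia)).
    pose proof (frac_between a (S k) n m Hn Hm ltac:(lia)). lra.
  - unfold Spath. rewrite ssum_block. apply ssum_ext. intros i Hi.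
    destruct (H i Hi) as [c [r [f [Hf Hs]]]].
    set (X := fun j => g (INR (i * m + j) / INR (n * m))).
    assert (HX : forall j, (j <= m)%nat -> sq c r (X j)).
    { intros j Hj. apply Hs. apply frac_between; auto. nia. }
    rewrite (ssum_ext _ (fun j => f (X (S j)) - f (X j))).
    + rewrite (ssum_tele (fun j => f (X j))). rewrite <- (incr_spec c r f) by (auto; apply HX; lia).
      unfold X. f_equal; f_equal.
      * rewrite Nat.add_0_r, mult_INR, mult_INR. assert (0 < INR n) by (apply lt_0_INR; lia).
        assert (0 < INR m) by (apply lt_0_INR; lia). field. lra.
      * replace (i * m + m)%nat with (S i * m)%nat by (simpl; lia).
        rewrite mult_INR, mult_INR. assert (0 < INR n) by (apply lt_0_INR; lia).
        assert (0 < INR m) by (apply lt_0_INR; lia). field. lra.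
    + intros j Hj. rewrite <- (incr_spec c r f) by (auto; apply HX; lia). unfold X. f_equal. f_equal. f_equal. f_equal. lia.
Qed.

Lemma fine_unique g n n' : fine g n -> fine g n' -> Spath g n = Spath g n'.
Proof.
  intros H1 H2. destruct (fine_refine g n n' H1 (proj1 H2)) as [_ E1].
  destruct (fine_refine g n' n H2 (proj1 H1)) as [_ E2].
  rewrite <- E1, <- E2, Nat.mul_comm. reflexivity.
Qed.

Lemma fine_ext g g' n : (forall t, g t = g' t) -> fine g n -> fine g' n /\ Spath g' n = Spath g n.
Proof.
  intros E [Hn H]. split. split; auto. intros k Hk. destruct (H k Hk) as [c [r [f [Hf Hs]]]].
  exists c, r, f. split; auto. intros t Ht. rewrite <- E. auto.
  unfold Spath. apply ssum_ext. intros k _. rewrite !E. reflexivity.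
Qed.

Definition rev (g : R -> pt) (t : R) : pt := g (1 - t).

Lemma fine_rev g n : fine g n -> fine (rev g) n /\ Spath (rev g) n = - Spath g n.
Proof.
  intros [Hn H].
  assert (HnR : 0 < INR n) by (apply lt_0_INR; lia).
  assert (Key : forall k, (k < n)%nat -> 1 - INR k / INR n = INR (S (n - S k)) / INR n /\
                                   1 - INR (S k) / INR n = INR (n - S k) / INR n).
  { intros k Hk. rewrite S_INR, minus_INR by lia. rewrite S_INR. split; field; lra. }
  split.
  - split; auto. intros k Hk. destruct (H (n - S k)%nat ltac:(lia)) as [c [r [f [Hf Hs]]]].
    exists c, r, f. split; auto. intros t Ht. unfold rev. apply Hs.
    destruct (Key k Hk) as [K1 K2]. lra.
  - unfold Spath.
    rewrite <- (ssum_rev (fun k => incr (g (INR k / INR n)) (g (INR (S k) / INR n)))).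
    rewrite <- ssum_opp. apply ssum_ext. intros k Hk.
    destruct (H (n - S k)%nat ltac:(lia)) as [c [r [f [Hf Hs]]]].
    destruct (Key k Hk) as [K1 K2]. unfold rev. rewrite K1, K2.
    assert (0 <= INR (n - S k)) by apply pos_INR.
    assert (INR (n - S k) / INR n <= INR (S (n - S k)) / INR n).
    { unfold Rdiv. apply Rmult_le_compat_r. left; apply Rinv_0_lt_compat; lra. rewrite S_INR; lra. }
    rewrite !(incr_spec c r f); auto; try (apply Hs; lra). ring.
Qed.

Definition cl1 (x : R) : R := (x + 1 - Rabs (x - 1)) / 2.
Definition cl0 (x : R) : R := (x + Rabs x) / 2.
Lemma cl1_le x : x <= 1 -> cl1 x = x.
Proof. intros H. unfold cl1. rewrite Rabs_left1 by lra. field. Qed.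
Lemma cl1_ge x : x >= 1 -> cl1 x = 1.
Proof. intros H. unfold cl1. rewrite Rabs_right by lra. field. Qed.
Lemma cl0_le x : x <= 0 -> cl0 x = 0.
Proof. intros H. unfold cl0. rewrite Rabs_left1 by lra. field. Qed.
Lemma cl0_ge x : x >= 0 -> cl0 x = x.
Proof. intros H. unfold cl0. rewrite Rabs_right by lra. field. Qed.

Definition cat (g1 g2 : R -> pt) (t : R) : pt :=
  (fst (g1 (cl1 (2 * t))) + fst (g2 (cl0 (2 * t - 1))) - fst (g2 0),
   snd (g1 (cl1 (2 * t))) + snd (g2 (cl0 (2 * t - 1))) - snd (g2 0)).

Lemma cat_l g1 g2 t : t <= 1/2 -> cat g1 g2 t = g1 (2 * t).
Proof. intros H. unfold cat. rewrite cl1_le, cl0_le by lra. destruct (g1 (2 * t)); simpl. f_equal; ring. Qed.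
Lemma cat_r g1 g2 t : g1 1 = g2 0 -> t >= 1/2 -> cat g1 g2 t = g2 (2 * t - 1).
Proof. intros E H. unfold cat. rewrite cl1_ge, cl0_ge by lra. rewrite E. destruct (g2 (2 * t - 1)); simpl. f_equal; ring. Qed.

Lemma cpt (f : R -> R) x : continuity_pt f x -> continuous f x.
Proof. intros H. apply continuity_pt_filterlim. exact H. Qed.
Lemma cpt' (f : R -> R) x : continuous f x -> continuity_pt f x.
Proof. intros H. apply continuity_pt_filterlim. exact H. Qed.

Lemma cont_fst_c (g : R -> pt) t : continuous g t -> continuous (fun t => fst (g t)) t.
Proof. intros H. apply (continuous_comp g fst). exact H. destruct (g t); apply continuous_fst. Qed.
Lemma cont_snd_c (g : R -> pt) t : continuous g t -> continuous (fun t => snd (g t)) t.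
Proof. intros H. apply (continuous_comp g snd). exact H. destruct (g t); apply continuous_snd. Qed.

Lemma cont_comp_R (h : R -> R) (g : R -> pt) t : continuous h t -> (forall s, continuous g s) -> continuous (fun t => g (h t)) t.
Proof. intros H1 H2. apply (continuous_comp h g). exact H1. apply H2. Qed.

Lemma cat_cont g1 g2 : (forall t, continuous g1 t) -> (forall t, continuous g2 t) -> forall t, continuous (cat g1 g2) t.
Proof.
  intros H1 H2 t. unfold cat.
  assert (C1 : continuous (fun t => g1 (cl1 (2 * t))) t).
  { apply cont_comp_R; auto. apply cpt. unfold cl1. reg. }
  assert (C2 : continuous (fun t => g2 (cl0 (2 * t - 1))) t).
  { apply cont_comp_R; auto. apply cpt. unfold cl0. reg. }
  apply continuous_pair; apply cpt.
  - apply continuity_pt_minus. apply continuity_pt_plus; apply cpt'.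
    apply (cont_fst_c (fun t => g1 (cl1 (2 * t)))); auto.
    apply (cont_fst_c (fun t => g2 (cl0 (2 * t - 1)))); auto. apply continuity_pt_const. intros a b; auto.
  - apply continuity_pt_minus. apply continuity_pt_plus; apply cpt'.
    apply (cont_snd_c (fun t => g1 (cl1 (2 * t)))); auto.
    apply (cont_snd_c (fun t => g2 (cl0 (2 * t - 1)))); auto. apply continuity_pt_const. intros a b; auto.
Qed.

Lemma rev_cont g : (forall t, continuous g t) -> forall t, continuous (rev g) t.
Proof. intros H t. unfold rev. apply cont_comp_R; auto. apply cpt. reg. Qed.

Lemma fine_cat g1 g2 n : g1 1 = g2 0 -> fine g1 n -> fine g2 n ->
  fine (cat g1 g2) (n + n) /\ Spath (cat g1 g2) (n + n) = Spath g1 n + Spath g2 n.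
Proof.
  intros E [Hn H1] [_ H2].
  assert (HnR : 0 < INR n) by (apply lt_0_INR; lia).
  assert (N2 : INR (n + n) = 2 * INR n) by (rewrite plus_INR; ring).
  assert (PL : forall k, (k <= n)%nat -> cat g1 g2 (INR k / INR (n + n)) = g1 (INR k / INR n)).
  { intros k Hk. apply le_INR in Hk. rewrite cat_l. f_equal. rewrite N2. field. lra.
    rewrite N2. assert (0 <= (INR n - INR k) / (2 * INR n)) by (apply Rdiv_le_0_compat; lra).
    assert ((INR n - INR k) / (2 * INR n) = 1/2 - INR k / (2 * INR n)) by (field; lra). lra. }
  assert (PR : forall j, (j <= n)%nat -> cat g1 g2 (INR (n + j) / INR (n + n)) = g2 (INR j / INR n)).
  { intros j Hj. pose proof (pos_INR j). rewrite cat_r; auto. f_equal. rewrite N2, plus_INR. field. lra.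
    rewrite N2, plus_INR. assert (0 <= INR j / (2 * INR n)) by (apply Rdiv_le_0_compat; lra).
    assert (INR j / (2 * INR n) = (INR n + INR j) / (2 * INR n) - 1/2) by (field; lra). lra. }
  split.
  - split. lia. intros k Hk. destruct (Nat.lt_ge_cases k n) as [Hk'|Hk'].
    + destruct (H1 k Hk') as [c [r [f [Hf Hs]]]]. exists c, r, f. split; auto.
      intros t Ht. rewrite N2, !S_INR in Ht. apply le_INR in Hk'. rewrite S_INR in Hk'.
      assert (E1 : INR k / (2 * INR n) = (INR k / INR n) / 2) by (field; lra).
      assert (E2 : (INR k + 1) / (2 * INR n) = ((INR k + 1) / INR n) / 2) by (field; lra).
      assert (E3 : (INR k + 1) / INR n <= 1) by (apply frac_le1; lra).
      rewrite E1, E2 in Ht.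
      rewrite cat_l by lra. apply Hs. rewrite S_INR. lra.
    + destruct (H2 (k - n)%nat ltac:(lia)) as [c [r [f [Hf Hs]]]]. exists c, r, f. split; auto.
      intros t Ht. rewrite N2, !S_INR in Ht. pose proof (le_INR _ _ Hk') as Hk''.
      assert (E1 : (INR k - INR n) / INR n = 2 * (INR k / (2 * INR n)) - 1) by (field; lra).
      assert (E2 : (INR k - INR n + 1) / INR n = 2 * ((INR k + 1) / (2 * INR n)) - 1) by (field; lra).
      assert (E3 : 0 <= (INR k - INR n) / INR n) by (apply Rdiv_le_0_compat; lra).
      rewrite cat_r by (auto; lra). apply Hs. rewrite S_INR, minus_INR by lia. lra.
  - unfold Spath. rewrite ssum_add. f_equal.
    + apply ssum_ext. intros k Hk. rewrite !PL by lia. reflexivity.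
    + apply ssum_ext. intros j Hj. replace (S (n + j)) with (n + S j)%nat by lia. rewrite !PR by lia. reflexivity.
Qed.

Lemma frac_le (a b N : nat) : (N > 0)%nat -> (a <= b)%nat -> INR a / INR N <= INR b / INR N.
Proof.
  intros HN H. apply le_INR in H. assert (0 < INR N) by (apply lt_0_INR; lia).
  unfold Rdiv. apply Rmult_le_compat_r. left; apply Rinv_0_lt_compat; lra. exact H.
Qed.

Lemma frac_0 N : INR 0 / INR N = 0.
Proof. simpl. unfold Rdiv. ring. Qed.
Lemma frac_1 N : (N > 0)%nat -> INR N / INR N = 1.
Proof. intros. field. apply not_0_INR. lia. Qed.

Lemma loop_zero g n : path_in Om g -> g 1 = g 0 -> loop_null_homotopic Om g -> fine g n -> Spath g n = 0.
Proof.
  intros Hp Hl [H [Hc [HOm [H0 [H1 [HL HR]]]]]] Hf.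
  destruct (lebesgue Om (fun c r => exists f, goodf c r f) H) as [N [HN Hcell]].
  - intros c Hc'. destruct (LocEx c Hc') as [r [f Hf']]. exists r. split. apply Hf'. eauto.
  - exact Hc.
  - exact HOm.
  - set (rho := fun (j : nat) (t : R) => H (t, INR j / INR N)).
    assert (Fr : forall j, (j <= N)%nat -> fine (rho j) N).
    { intros j Hj. split; auto. intros k Hk.
      destruct (Hcell k (Nat.min j (N - 1)) Hk ltac:(lia)) as [c [r [[f Hf'] Hs]]].
      exists c, r, f. split; auto. intros t Ht. apply Hs. split; auto.
      split; apply frac_le; lia. }
    assert (Row : forall j, (j < N)%nat -> Spath (rho j) N = Spath (rho (S j)) N).
    { intros j Hj. apply Rminus_diag_uniq. unfold Spath. rewrite <- ssum_minus.
      set (V := fun i : nat => incr (H (INR i / INR N, INR j / INR N)) (H (INR i / INR N, INR (S j) / INR N))).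
      rewrite (ssum_ext _ (fun i => - (V (S i) - V i))).
      - rewrite ssum_opp, ssum_tele.
        assert (V0 : V O = 0).
        { destruct (Hcell O j ltac:(lia) Hj) as [c [r [[f Hf'] Hs]]].
          assert (Z1 : sq c r (g 0)).
          { rewrite <- (HL (INR j / INR N)). rewrite <- (frac_0 N). apply Hs.
            split; split; try apply frac_le; lia. }
          unfold V. rewrite (frac_0 N), !HL. rewrite (incr_spec c r f); auto. ring. }
        assert (VN : V N = 0).
        { destruct (Hcell (N - 1)%nat j ltac:(lia) Hj) as [c [r [[f Hf'] Hs]]].
          assert (Z1 : sq c r (g 0)).
          { rewrite <- (HR (INR j / INR N)). rewrite <- (frac_1 N) by lia. apply Hs.
            split; split; try apply frac_le; lia. }
          unfold V. rewrite frac_1, !HR by lia. rewrite (incr_spec c r f); auto. ring. }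
        rewrite V0, VN. ring.
      - intros i Hi. destruct (Hcell i j Hi Hj) as [c [r [[f Hf'] Hs]]].
        unfold V, rho. rewrite !(incr_spec c r f); auto; try (apply Hs; split; split; apply frac_le; lia).
        ring. }
    assert (RowN : Spath (rho N) N = 0).
    { unfold Spath. apply ssum_zero. intros i Hi.
      destruct (Hcell i (N - 1)%nat Hi ltac:(lia)) as [c [r [[f Hf'] Hs]]].
      assert (Z1 : sq c r (g 0)).
      { rewrite <- (H1 (INR i / INR N)). rewrite <- (frac_1 N) by lia. apply Hs.
        split; split; try apply frac_le; lia. }
      unfold rho. rewrite frac_1 by lia. rewrite !H1.
      rewrite (incr_spec c r f); auto. ring. }
    assert (All : forall j, (j <= N)%nat -> Spath (rho (N - j)%nat) N = 0).
    { induction j; intros Hj. rewrite Nat.sub_0_r. exact RowN.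
      rewrite Row by lia. replace (S (N - S j)) with (N - j)%nat by lia. apply IHj. lia. }
    assert (R0 : Spath (rho O) N = 0) by (replace O with (N - N)%nat by lia; apply All; lia).
    destruct (fine_ext (rho O) g N) as [FgN EgN].
    { intros t. unfold rho. rewrite frac_0. apply H0. }
    { apply Fr. lia. }
    rewrite (fine_unique g n N Hf FgN), EgN. exact R0.
Qed.

Lemma path_indep g1 g2 n1 n2 :
  (forall g, path_in Om g -> g 1 = g 0 -> loop_null_homotopic Om g) ->
  path_in Om g1 -> path_in Om g2 -> g1 0 = g2 0 -> g1 1 = g2 1 ->
  fine g1 n1 -> fine g2 n2 -> Spath g1 n1 = Spath g2 n2.
Proof.
  intros SC [C1 O1] [C2 O2] E0 E1 F1 F2.
  destruct (fine_refine g1 n1 n2 F1 (proj1 F2)) as [F1' S1].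
  destruct (fine_refine g2 n2 n1 F2 (proj1 F1)) as [F2' S2].
  rewrite Nat.mul_comm in F2', S2.
  destruct (fine_rev g2 _ F2') as [F3 S3].
  assert (Ej : g1 1 = rev g2 0) by (unfold rev; rewrite Rminus_0_r; auto).
  destruct (fine_cat g1 (rev g2) _ Ej F1' F3) as [F4 S4].
  assert (PL : path_in Om (cat g1 (rev g2))).
  { split. apply cat_cont; auto. apply rev_cont; auto.
    intros t Ht. destruct (Rle_dec t (1/2)).
    - rewrite cat_l by auto. apply O1. lra.
    - rewrite cat_r by (auto; lra). unfold rev. apply O2. lra. }
  assert (LL : cat g1 (rev g2) 1 = cat g1 (rev g2) 0).
  { rewrite (cat_l g1 (rev g2) 0) by lra. rewrite (cat_r g1 (rev g2) 1) by (auto; lra). unfold rev.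
    replace (2 * 1 - 1) with 1 by ring. replace (2 * 0) with 0 by ring. rewrite Rminus_diag. auto. }
  pose proof (loop_zero _ _ PL LL (SC _ PL LL) F4) as Z.
  rewrite S4, S3 in Z. lra.
Qed.

Definition PV (g : R -> pt) : R :=
  match excluded_middle_informative (exists n, fine g n) with
  | left H => Spath g (proj1_sig (constructive_indefinite_description _ H))
  | right _ => 0
  end.

Lemma PV_spec g n : fine g n -> PV g = Spath g n.
Proof.
  intros F. unfold PV. destruct excluded_middle_informative as [H|H].
  - destruct (constructive_indefinite_description _ H) as [m Hm]. simpl. apply fine_unique; auto.
  - exfalso; eauto.
Qed.

Definition seg (a b : pt) (t : R) : pt := (fst a + t * (fst b - fst a), snd a + t * (snd b - snd a)).

Lemma seg_cont a b t : continuous (seg a b) t.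
Proof. unfold seg. apply continuous_pair; apply cpt; reg. Qed.

Lemma seg_sq c r a b t : sq c r a -> sq c r b -> 0 <= t <= 1 -> sq c r (seg a b t).
Proof.
  intros [Ha1 Ha2] [Hb1 Hb2] Ht. unfold seg; split; simpl.
  - replace (fst a + t * (fst b - fst a) - fst c) with ((1 - t) * (fst a - fst c) + t * (fst b - fst c)) by ring.
    eapply Rle_lt_trans. apply Rabs_triang. rewrite !Rabs_mult, (Rabs_right t), (Rabs_right (1 - t)) by lra.
    destruct (Req_dec t 0). subst. nra. nra.
  - replace (snd a + t * (snd b - snd a) - snd c) with ((1 - t) * (snd a - snd c) + t * (snd b - snd c)) by ring.
    eapply Rle_lt_trans. apply Rabs_triang. rewrite !Rabs_mult, (Rabs_right t), (Rabs_right (1 - t)) by lra.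
    destruct (Req_dec t 0). subst. nra. nra.
Qed.

Lemma potential_exists :
  path_connected Om ->
  (forall g, path_in Om g -> g 1 = g 0 -> loop_null_homotopic Om g) ->
  exists x : pt -> R, forall q, Om q ->
    is_derive (fun t => x (t, snd q)) (fst q) (P q) /\ is_derive (fun t => x (fst q, t)) (snd q) (Q q).
Proof.
  intros [[p0 Hp0] PC] SC.
  set (pathto := fun q => match excluded_middle_informative (exists g, path_in Om g /\ g 0 = p0 /\ g 1 = q) with
                          | left H => proj1_sig (constructive_indefinite_description _ H)
                          | right _ => fun _ : R => p0 end).
  assert (PT : forall q, Om q -> path_in Om (pathto q) /\ pathto q 0 = p0 /\ pathto q 1 = q).
  { intros q Hq. unfold pathto. destruct excluded_middle_informative as [H|H].
    - destruct (constructive_indefinite_description _ H) as [g Hg]. simpl. exact Hg.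
    - exfalso. apply H. apply PC; auto. }
  set (pot := fun q => PV (pathto q)).
  assert (Key : forall q, Om q -> exists r f, goodf q r f /\ forall q', sq q r q' -> pot q' = pot q + (f q' - f q)).
  { intros q Hq. destruct (LocEx q Hq) as [r [f Hf]]. exists r, f. split; auto.
    intros q' Hq'.
    assert (Hqq : sq q r q) by (split; rewrite Rminus_diag, Rabs_R0; apply Hf).
    destruct (PT q Hq) as [[Cg Og] [G0 G1]].
    destruct (fine_exists (pathto q) Cg Og) as [n Fn].
    assert (Fs : fine (seg q q') n).
    { split. apply Fn. intros k Hk. exists q, r, f. split; auto. intros t Ht. apply seg_sq; auto.
      assert (0 < INR n) by (apply lt_0_INR; apply Fn).
      pose proof (frac_le O k n (proj1 Fn) ltac:(lia)). pose proof (frac_le (S k) n n (proj1 Fn) ltac:(lia)).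
      rewrite frac_0 in *. rewrite frac_1 in * by apply Fn. lra. }
    assert (Ss : Spath (seg q q') n = f q' - f q).
    { unfold Spath. rewrite (ssum_ext _ (fun k => f (seg q q' (INR (S k) / INR n)) - f (seg q q' (INR k / INR n)))).
      - rewrite (ssum_tele (fun k => f (seg q q' (INR k / INR n)))).
        rewrite frac_0, frac_1 by apply Fn. unfold seg. simpl. f_equal; f_equal.
        destruct q'; simpl; f_equal; ring. destruct q; simpl; f_equal; ring.
      - intros k Hk. apply (incr_spec q r f); auto; apply seg_sq; auto;
        assert (0 < INR n) by (apply lt_0_INR; apply Fn);
        [pose proof (frac_le O k n (proj1 Fn) ltac:(lia)); pose proof (frac_le k n n (proj1 Fn) ltac:(lia))
        |pose proof (frac_le O (S k) n (proj1 Fn) ltac:(lia)); pose proof (frac_le (S k) n n (proj1 Fn) ltac:(lia))];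
        rewrite frac_0 in *; rewrite frac_1 in * by apply Fn; lra. }
    assert (Ej : pathto q 1 = seg q q' 0) by (rewrite G1; unfold seg; destruct q; simpl; f_equal; ring).
    destruct (fine_cat _ _ n Ej Fn Fs) as [Fc Sc].
    assert (Oq' : Om q') by apply (proj2 Hf q' Hq').
    destruct (PT q' Oq') as [[Cg' Og'] [G0' G1']].
    destruct (fine_exists (pathto q') Cg' Og') as [m Fm].
    assert (PC' : path_in Om (cat (pathto q) (seg q q'))).
    { split. apply cat_cont; auto. apply seg_cont.
      intros t Ht. destruct (Rle_dec t (1/2)).
      - rewrite cat_l by auto. apply Og. lra.
      - rewrite cat_r by (auto; lra). apply (proj2 Hf). apply seg_sq; auto. lra. }
    unfold pot. rewrite (PV_spec _ m Fm), (PV_spec _ n Fn).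
    rewrite (path_indep (pathto q') (cat (pathto q) (seg q q')) m (n + n) SC); auto.
    + rewrite Sc, Ss. reflexivity.
    + split; auto.
    + rewrite (cat_l _ _ 0) by lra. rewrite G0'. rewrite Rmult_0_r. auto.
    + rewrite (cat_r _ _ 1) by (auto; lra). rewrite G1'. unfold seg.
      destruct q'; simpl; f_equal; ring. }
  exists pot. intros q Hq. destruct (Key q Hq) as [r [f [Hf Hp]]].
  assert (Hqq : sq q r q) by (split; rewrite Rminus_diag, Rabs_R0; apply Hf).
  destruct (proj2 Hf q Hqq) as [_ [D1 D2]].
  assert (L : locally q (fun z => f z + (pot q - f q) = pot z)).
  { apply (filter_imp (sq q r)). intros z Hz. rewrite (Hp z Hz). ring. apply sq_locally; auto. }
  split.
  - apply (is_derive_ext_loc (fun t => f (t, snd q) + (pot q - f q))).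
    apply (locally_u _ q L).
    replace (P q) with (P q + 0) by ring.
    apply (isd_plus (fun t => f (t, snd q)) (fun _ => pot q - f q)); auto. apply isd_const.
  - apply (is_derive_ext_loc (fun t => f (fst q, t) + (pot q - f q))).
    apply (locally_v _ q L).
    replace (Q q) with (Q q + 0) by ring.
    apply (isd_plus (fun t => f (fst q, t)) (fun _ => pot q - f q)); auto. apply isd_const.
Qed.

End Mono.

Lemma const_on (Om : pt -> Prop) (d : pt -> R) : open Om -> path_connected Om ->
  (forall q, Om q -> is_derive (fun t => d (t, snd q)) (fst q) 0 /\ is_derive (fun t => d (fst q, t)) (snd q) 0) ->
  forall a b, Om a -> Om b -> d a = d b.
Proof.
  intros HO [_ PC] HD a b Ha Hb.
  set (Z := fun _ : pt => 0).
  assert (GZ : forall c r, r > 0 -> (forall q, sq c r q -> Om q) -> goodf Om Z Z c r (fun _ => 0) /\ goodf Om Z Z c r d).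
  { intros c r Hr Hs. split; split; auto; intros q Hq; split; auto.
    all: try (split; apply isd_const). }
  assert (LE : forall c, Om c -> exists r f, goodf Om Z Z c r f).
  { intros c Hc. destruct (open_sq Om c HO Hc) as [r [Hr Hs]]. exists r, (fun _ => 0). apply GZ; auto. }
  destruct (PC a b Ha Hb) as [g [[Cg Og] [G0 G1]]].
  destruct (fine_exists Om Z Z LE g Cg Og) as [n [Hn Fn]].
  assert (Ind : forall k, (k <= n)%nat -> d (g (INR k / INR n)) = d (g 0)).
  { induction k; intros Hk. rewrite frac_0. reflexivity.
    rewrite <- IHk by lia. destruct (Fn k ltac:(lia)) as [c [r [f [Hf Hs]]]].
    assert (Hs' : forall q, sq c r q -> Om q) by (intros; apply Hf; auto).
    destruct (GZ c r (proj1 Hf) Hs') as [G1' G2'].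
    assert (A1 : sq c r (g (INR k / INR n))) by (apply Hs; split; [lra|apply frac_le; lia]).
    assert (A2 : sq c r (g (INR (S k) / INR n))) by (apply Hs; split; [apply frac_le; lia|lra]).
    pose proof (incr_spec Om Z Z c r _ _ _ G1' A1 A2) as E1.
    pose proof (incr_spec Om Z Z c r _ _ _ G2' A1 A2) as E2. lra. }
  rewrite <- G0, <- G1. symmetry. rewrite <- (frac_1 n) by lia. apply Ind. lia.
Qed.

Lemma sq_v_between c r q z : sq c r q -> Rmin (snd c) (snd q) <= z <= Rmax (snd c) (snd q) -> sq c r (fst q, z).
Proof.
  intros [H1 H2] Hz. pose proof (Rabs_pos (fst q - fst c)). split; simpl; auto. eapply between_abs; eauto.
  rewrite Rminus_diag, Rabs_R0. lra.
Qed.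

Lemma local_primitive (Om : pt -> Prop) (P Q : pt -> R) : open Om ->
  (forall p, Om p -> continuous P p /\ continuous Q p /\ continuous (du Q) p) ->
  (forall p, Om p -> ex_derive (fun t => Q (t, snd p)) (fst p) /\ ex_derive (fun s => P (fst p, s)) (snd p)) ->
  (forall p, Om p -> dv P p = du Q p) ->
  forall c, Om c -> exists r f, goodf Om P Q c r f.
Proof.
  intros HO HC HD HCl c Hc.
  destruct (open_sq Om c HO Hc) as [r [Hr Hs]].
  destruct c as [c1 c2].
  set (f := fun z : pt => RInt (fun t => P (t, c2)) c1 (fst z) + RInt (fun s => Q (fst z, s)) c2 (snd z)).
  exists r, f. split; auto. intros q Hq. split; [apply Hs; auto|].
  destruct q as [q1 q2].
  assert (IQ : forall u b, sq (c1, c2) r (u, b) -> ex_RInt (fun s => Q (u, s)) c2 b).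
  { intros u b Hb. apply (@ex_RInt_continuous R_CompleteNormedModule). intros z Hz.
    apply (cont_line_v Q (u, z)). apply HC, Hs. apply (sq_v_between (c1, c2) r (u, b) z Hb Hz). }
  assert (IP : forall b, Rabs (b - c1) < r -> ex_RInt (fun t => P (t, c2)) c1 b).
  { intros b Hb. apply (@ex_RInt_continuous R_CompleteNormedModule). intros z Hz.
    apply (cont_line_u P (z, c2)). apply HC, Hs. split; simpl. eapply between_abs; eauto.
    rewrite Rminus_diag, Rabs_R0; auto. rewrite Rminus_diag, Rabs_R0; auto. }
  destruct Hq as [Hq1 Hq2]; simpl in Hq1, Hq2.
  assert (Lq : locally (q1, q2) (sq (c1, c2) r)) by (apply sq_locally; split; auto).
  split; simpl.
  -
    eapply (isd_ext (fun t => RInt (fun t0 => P (t0, c2)) c1 t + RInt (fun s => Q (t, s)) c2 q2)).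
    { intros t. reflexivity. }
    { reflexivity. }
    replace (P (q1, q2)) with (P (q1, c2) + (P (q1, q2) - P (q1, c2))) by ring.
    apply isd_plus.
    + apply (is_derive_RInt (fun t => P (t, c2)) (fun b => RInt (fun t => P (t, c2)) c1 b) c1 q1).
      * apply (filter_imp (fun b => Rabs (b - c1) < r)). intros b Hb. apply (@RInt_correct R_CompleteNormedModule). apply IP; auto.
        apply (locally_u (sq (c1, c2) r) (q1, q2)) in Lq. revert Lq. apply filter_imp. intros b [Hb _]; auto.
      * apply (cont_line_u P (q1, c2)). apply HC, Hs. split; simpl; auto. rewrite Rminus_diag, Rabs_R0; auto.
    + assert (E : RInt (fun t => Derive (fun u => Q (u, t)) q1) c2 q2 = P (q1, q2) - P (q1, c2)).
      { rewrite (RInt_ext _ (Derive (fun s => P (q1, s)))).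
        - apply RInt_Derive.
          + intros x Hx. apply (HD (q1, x)). apply Hs. apply (sq_v_between (c1, c2) r (q1, q2) x); auto. split; auto.
          + intros x Hx. assert (Hx' : sq (c1, c2) r (q1, x)) by (apply (sq_v_between (c1, c2) r (q1, q2) x); auto; split; auto).
            apply (continuous_ext_loc _ (fun t => du Q (q1, t))).
            * apply (filter_imp (fun y => Om (q1, y))).
              intros y Hy. symmetry. apply (HCl (q1, y) Hy).
              apply (locally_v Om (q1, x)). apply HO. apply Hs; auto.
            * apply (cont_line_v (du Q) (q1, x)). apply HC, Hs; auto.
        - intros x Hx. symmetry. apply (HCl (q1, x)). apply Hs. apply (sq_v_between (c1, c2) r (q1, q2) x); auto.
          split; auto. simpl; lra. }
      rewrite <- E.
      apply (is_derive_RInt_param (fun u s => Q (u, s)) c2 q2 q1).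
      * apply (locally_u (sq (c1, c2) r) (q1, q2)) in Lq. revert Lq. apply filter_imp. intros x [Hx _] t Ht.
        apply (HD (x, t)). apply Hs. apply (sq_v_between (c1, c2) r (x, q2) t); auto. split; auto.
      * intros t Ht. apply (cont_2d (du Q)). apply HC, Hs. apply (sq_v_between (c1, c2) r (q1, q2) t); auto. split; auto.
      * apply (locally_u (sq (c1, c2) r) (q1, q2)) in Lq. revert Lq. apply filter_imp. intros x [Hx _].
        apply IQ. split; auto.
  -
    eapply (isd_ext (fun t => RInt (fun t0 => P (t0, c2)) c1 q1 + RInt (fun s => Q (q1, s)) c2 t)).
    { intros t. reflexivity. }
    { reflexivity. }
    replace (Q (q1, q2)) with (0 + Q (q1, q2)) by ring.
    apply isd_plus. apply isd_const.
    apply (is_derive_RInt (fun s => Q (q1, s)) (fun b => RInt (fun s => Q (q1, s)) c2 b) c2 q2).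
    + apply (locally_v (sq (c1, c2) r) (q1, q2)) in Lq. revert Lq. apply filter_imp. intros b Hb.
      apply (@RInt_correct R_CompleteNormedModule). apply IQ; auto.
    + apply (cont_line_v Q (q1, q2)). apply HC, Hs. split; auto.
Qed.

Theorem poincare (Om : pt -> Prop) (P Q : pt -> R) : open Om -> simply_connected Om ->
  (forall p, Om p -> continuous P p /\ continuous Q p /\ continuous (du Q) p) ->
  (forall p, Om p -> ex_derive (fun t => Q (t, snd p)) (fst p) /\ ex_derive (fun s => P (fst p, s)) (snd p)) ->
  (forall p, Om p -> dv P p = du Q p) ->
  exists x : pt -> R, forall q, Om q ->
    is_derive (fun t => x (t, snd q)) (fst q) (P q) /\ is_derive (fun t => x (fst q, t)) (snd q) (Q q).
Proof.
  intros HO [PC SC] HC HD HCl. apply potential_exists; auto.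
  apply local_primitive; auto.
Qed.

Definition exu (f : pt -> R) (p : pt) := ex_derive (fun t => f (t, snd p)) (fst p).
Definition exv (f : pt -> R) (p : pt) := ex_derive (fun t => f (fst p, t)) (snd p).

Lemma exu_plus f g p : exu f p -> exu g p -> exu (fun q => f q + g q) p.
Proof. intros [l1 H1] [l2 H2]. exists (l1 + l2). apply (isd_plus (fun t => f (t, snd p)) (fun t => g (t, snd p))); auto. Qed.
Lemma exu_minus f g p : exu f p -> exu g p -> exu (fun q => f q - g q) p.
Proof. intros [l1 H1] [l2 H2]. eexists. apply (isd_minus (fun t => f (t, snd p)) (fun t => g (t, snd p))); eauto. Qed.
Lemma exu_mult f g p : exu f p -> exu g p -> exu (fun q => f q * g q) p.
Proof. intros [l1 H1] [l2 H2]. eexists. apply (isd_mult (fun t => f (t, snd p)) (fun t => g (t, snd p))); eauto. Qed.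
Lemma exu_opp f p : exu f p -> exu (fun q => - f q) p.
Proof. intros [l1 H1]. eexists. apply (isd_opp (fun t => f (t, snd p))); eauto. Qed.
Lemma exu_const c p : exu (fun _ => c) p.
Proof. eexists. apply isd_const. Qed.
Lemma exv_plus f g p : exv f p -> exv g p -> exv (fun q => f q + g q) p.
Proof. intros [l1 H1] [l2 H2]. exists (l1 + l2). apply (isd_plus (fun t => f (fst p, t)) (fun t => g (fst p, t))); auto. Qed.
Lemma exv_minus f g p : exv f p -> exv g p -> exv (fun q => f q - g q) p.
Proof. intros [l1 H1] [l2 H2]. eexists. apply (isd_minus (fun t => f (fst p, t)) (fun t => g (fst p, t))); eauto. Qed.
Lemma exv_mult f g p : exv f p -> exv g p -> exv (fun q => f q * g q) p.
Proof. intros [l1 H1] [l2 H2]. eexists. apply (isd_mult (fun t => f (fst p, t)) (fun t => g (fst p, t))); eauto. Qed.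
Lemma exv_opp f p : exv f p -> exv (fun q => - f q) p.
Proof. intros [l1 H1]. eexists. apply (isd_opp (fun t => f (fst p, t))); eauto. Qed.
Lemma exv_const c p : exv (fun _ => c) p.
Proof. eexists. apply isd_const. Qed.

#[global] Hint Resolve exu_plus exu_minus exu_mult exu_opp exu_const exv_plus exv_minus exv_mult exv_opp exv_const : exd.

Lemma du_plus f g p : exu f p -> exu g p -> du (fun q => f q + g q) p = du f p + du g p.
Proof. apply Derive_plus. Qed.
Lemma du_minus f g p : exu f p -> exu g p -> du (fun q => f q - g q) p = du f p - du g p.
Proof. apply Derive_minus. Qed.
Lemma du_mult f g p : exu f p -> exu g p -> du (fun q => f q * g q) p = du f p * g p + f p * du g p.
Proof. intros. unfold du. rewrite Derive_mult; auto. destruct p; reflexivity. Qed.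
Lemma du_opp f p : du (fun q => - f q) p = - du f p.
Proof. apply Derive_opp. Qed.
Lemma du_const c p : du (fun _ => c) p = 0.
Proof. unfold du. apply Derive_const. Qed.
Lemma dv_plus f g p : exv f p -> exv g p -> dv (fun q => f q + g q) p = dv f p + dv g p.
Proof. apply Derive_plus. Qed.
Lemma dv_minus f g p : exv f p -> exv g p -> dv (fun q => f q - g q) p = dv f p - dv g p.
Proof. apply Derive_minus. Qed.
Lemma dv_mult f g p : exv f p -> exv g p -> dv (fun q => f q * g q) p = dv f p * g p + f p * dv g p.
Proof. intros. unfold dv. rewrite Derive_mult; auto. destruct p; reflexivity. Qed.
Lemma dv_opp f p : dv (fun q => - f q) p = - dv f p.
Proof. apply Derive_opp. Qed.
Lemma dv_const c p : dv (fun _ => c) p = 0.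
Proof. unfold dv. apply Derive_const. Qed.

Lemma C1_exu Om f p : C1_on Om f -> Om p -> exu f p.
Proof. intros [H _] Hp. destruct (H p Hp) as [H1 H2]. exact H1. Qed.
Lemma C1_exv Om f p : C1_on Om f -> Om p -> exv f p.
Proof. intros [H _] Hp. destruct (H p Hp) as [H1 H2]. exact H2. Qed.

Lemma C1_gen (Om : pt -> Prop) (f : pt -> R) (dfu dfv : pt -> R) : open Om ->
  (forall p, Om p -> exu f p /\ exv f p /\ continuous f p) ->
  (forall p, Om p -> du f p = dfu p /\ dv f p = dfv p) ->
  (forall p, Om p -> continuous dfu p /\ continuous dfv p) -> C1_on Om f.
Proof.
  intros HO H1 H2 H3. split.
  - intros p Hp. split; apply H1; auto.
  - intros p Hp. split. apply H1; auto. split.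
    + apply (continuous_eqOn Om dfu); auto. intros q Hq. symmetry. apply H2; auto. apply H3; auto.
    + apply (continuous_eqOn Om dfv); auto. intros q Hq. symmetry. apply H2; auto. apply H3; auto.
Qed.

Lemma C1_cont Om f p : C1_on Om f -> Om p -> continuous f p.
Proof. intros [_ H] Hp. destruct (H p Hp) as [H1 [H2 H3]]. exact H1. Qed.
Lemma C1_cont_du Om f p : C1_on Om f -> Om p -> continuous (du f) p.
Proof. intros [_ H] Hp. destruct (H p Hp) as [H1 [H2 H3]]. exact H2. Qed.
Lemma C1_cont_dv Om f p : C1_on Om f -> Om p -> continuous (dv f) p.
Proof. intros [_ H] Hp. destruct (H p Hp) as [H1 [H2 H3]]. exact H3. Qed.

Lemma cont_plus (f g : pt -> R) p : continuous f p -> continuous g p -> continuous (fun q => f q + g q) p.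
Proof. intros. apply (continuous_plus f g); auto. Qed.
Lemma cont_minus (f g : pt -> R) p : continuous f p -> continuous g p -> continuous (fun q => f q - g q) p.
Proof. intros. apply (continuous_minus f g); auto. Qed.
Lemma cont_mult (f g : pt -> R) p : continuous f p -> continuous g p -> continuous (fun q => f q * g q) p.
Proof. intros. apply (continuous_mult f g); auto. Qed.
Lemma cont_opp (f : pt -> R) p : continuous f p -> continuous (fun q => - f q) p.
Proof. intros. apply (continuous_opp f); auto. Qed.

Lemma C1_plus Om f g : open Om -> C1_on Om f -> C1_on Om g -> C1_on Om (fun q => f q + g q).
Proof.
  intros HO Hf Hg. apply (C1_gen Om _ (fun q => du f q + du g q) (fun q => dv f q + dv g q)); auto.
  - intros p Hp. split; [|split]. apply exu_plus; eapply C1_exu; eauto. apply exv_plus; eapply C1_exv; eauto.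
    apply cont_plus; eapply C1_cont; eauto.
  - intros p Hp. split. apply du_plus; eapply C1_exu; eauto. apply dv_plus; eapply C1_exv; eauto.
  - intros p Hp. split; apply cont_plus; eauto using C1_cont_du, C1_cont_dv.
Qed.
Lemma C1_minus Om f g : open Om -> C1_on Om f -> C1_on Om g -> C1_on Om (fun q => f q - g q).
Proof.
  intros HO Hf Hg. apply (C1_gen Om _ (fun q => du f q - du g q) (fun q => dv f q - dv g q)); auto.
  - intros p Hp. split; [|split]. apply exu_minus; eapply C1_exu; eauto. apply exv_minus; eapply C1_exv; eauto.
    apply cont_minus; eapply C1_cont; eauto.
  - intros p Hp. split. apply du_minus; eapply C1_exu; eauto. apply dv_minus; eapply C1_exv; eauto.
  - intros p Hp. split; apply cont_minus; eauto using C1_cont_du, C1_cont_dv.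
Qed.
Lemma C1_mult Om f g : open Om -> C1_on Om f -> C1_on Om g -> C1_on Om (fun q => f q * g q).
Proof.
  intros HO Hf Hg. apply (C1_gen Om _ (fun q => du f q * g q + f q * du g q) (fun q => dv f q * g q + f q * dv g q)); auto.
  - intros p Hp. split; [|split]. apply exu_mult; eapply C1_exu; eauto. apply exv_mult; eapply C1_exv; eauto.
    apply cont_mult; eapply C1_cont; eauto.
  - intros p Hp. split. apply du_mult; eapply C1_exu; eauto. apply dv_mult; eapply C1_exv; eauto.
  - intros p Hp. split; apply cont_plus; apply cont_mult; eauto using C1_cont, C1_cont_du, C1_cont_dv.
Qed.
Lemma C1_opp Om f : open Om -> C1_on Om f -> C1_on Om (fun q => - f q).
Proof.
  intros HO Hf. apply (C1_gen Om _ (fun q => - du f q) (fun q => - dv f q)); auto.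
  - intros p Hp. split; [|split]. apply exu_opp; eapply C1_exu; eauto. apply exv_opp; eapply C1_exv; eauto.
    apply cont_opp; eapply C1_cont; eauto.
  - intros p Hp. split. apply du_opp. apply dv_opp.
  - intros p Hp. split; apply cont_opp; eauto using C1_cont_du, C1_cont_dv.
Qed.
Lemma C1_const Om c : open Om -> C1_on Om (fun _ => c).
Proof.
  intros HO. apply (C1_gen Om _ (fun _ => 0) (fun _ => 0)); auto.
  - intros p Hp. split; [|split]. apply exu_const. apply exv_const. apply continuous_const.
  - intros p Hp. split. apply du_const. apply dv_const.
  - intros p Hp. split; apply continuous_const.
Qed.

Lemma C1_eq Om f g : open Om -> eqOn Om f g -> C1_on Om f -> C1_on Om g.
Proof.
  intros HO He Hf. apply (C1_gen Om _ (du f) (dv f)); auto.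
  - intros p Hp. split; [|split].
    + apply (ex_derive_ext_loc (fun t => f (t, snd p))). apply (locally_u (fun q => f q = g q)).
      apply (filter_imp Om). intros; apply He; auto. apply HO, Hp. eapply C1_exu; eauto.
    + apply (ex_derive_ext_loc (fun t => f (fst p, t))). apply (locally_v (fun q => f q = g q)).
      apply (filter_imp Om). intros; apply He; auto. apply HO, Hp. eapply C1_exv; eauto.
    + apply (continuous_eqOn Om f); auto. eapply C1_cont; eauto.
  - intros p Hp. split; symmetry. apply (eqOn_du Om f g HO He p Hp). apply (eqOn_dv Om f g HO He p Hp).
  - intros p Hp. split; eauto using C1_cont_du, C1_cont_dv.
Qed.

Lemma pot_C2 Om x P Q : open Om ->
  (forall q, Om q -> is_derive (fun t => x (t, snd q)) (fst q) (P q) /\ is_derive (fun t => x (fst q, t)) (snd q) (Q q)) ->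
  C1_on Om P -> C1_on Om Q -> C2_on Om x.
Proof.
  intros HO HD HP HQ.
  assert (Eu : eqOn Om P (du x)) by (intros q Hq; symmetry; apply is_derive_unique, HD, Hq).
  assert (Ev : eqOn Om Q (dv x)) by (intros q Hq; symmetry; apply is_derive_unique, HD, Hq).
  split; [|split; [apply (C1_eq Om P); auto|apply (C1_eq Om Q); auto]].
  apply (C1_gen Om x P Q); auto.
  - intros p Hp. split; [|split]. eexists; apply HD; auto. eexists; apply HD; auto.
    destruct (open_sq Om p HO Hp) as [r [Hr Hs]].
    apply (cont_from_partials x P Q p r Hr). intros q Hq. apply HD, Hs, Hq.
    eapply C1_cont; eauto. eapply C1_cont; eauto.
  - intros p Hp. split; symmetry; auto.
  - intros p Hp. split; eapply C1_cont; eauto.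
Qed.

Lemma dz_rc x q : dz (rc x) q = (/2 * du x q, - (/2 * dv x q)).
Proof.
  unfold dz, cdu, cdv, rc, Cmult, Cminus, Cplus, Copp, Ci, RtoC, Re, Im; simpl.
  rewrite !du_const, !dv_const. unfold du, dv; cbv beta. f_equal; ring.
Qed.

Lemma du_ReG x p : du (fun q => Re (dz (rc x) q)) p = /2 * du (du x) p.
Proof. unfold du at 1. rewrite (Derive_ext _ (fun t => /2 * du x (t, snd p))). apply Derive_scal. intros t. rewrite dz_rc. reflexivity. Qed.
Lemma dv_ReG x p : dv (fun q => Re (dz (rc x) q)) p = /2 * dv (du x) p.
Proof. unfold dv at 1. rewrite (Derive_ext _ (fun t => /2 * du x (fst p, t))). apply Derive_scal. intros t. rewrite dz_rc. reflexivity. Qed.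
Lemma du_ImG x p : du (fun q => Im (dz (rc x) q)) p = - (/2 * du (dv x) p).
Proof. unfold du at 1. rewrite (Derive_ext _ (fun t => - (/2 * dv x (t, snd p)))). rewrite Derive_opp, Derive_scal. reflexivity. intros t. rewrite dz_rc. reflexivity. Qed.
Lemma dv_ImG x p : dv (fun q => Im (dz (rc x) q)) p = - (/2 * dv (dv x) p).
Proof. unfold dv at 1. rewrite (Derive_ext _ (fun t => - (/2 * dv x (fst p, t)))). rewrite Derive_opp, Derive_scal. reflexivity. intros t. rewrite dz_rc. reflexivity. Qed.

Lemma dzbdz x p : dzb (dz (rc x)) p = (/4 * (du (du x) p + dv (dv x) p), /4 * (dv (du x) p - du (dv x) p)).
Proof.
  unfold dzb at 1. unfold cdu at 1, cdv at 1. rewrite du_ReG, du_ImG, dv_ReG, dv_ImG.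
  unfold Cmult, Cplus, Ci, RtoC; simpl. f_equal; field.
Qed.

Lemma CR_of h p : dzb h p = RtoC 0 ->
  du (fun q => Re (h q)) p = dv (fun q => Im (h q)) p /\ du (fun q => Im (h q)) p = - dv (fun q => Re (h q)) p.
Proof.
  intros H. unfold dzb, cdu, cdv, Cmult, Cplus, Ci, RtoC in H; simpl in H. injection H. intros H1 H2. split; lra.
Qed.

Lemma Lap_of M N (a : R) p : dzb (dz (rc M)) p = Cmult (RtoC a) (dzb (dz (rc N)) p) ->
  du (du M) p + dv (dv M) p = a * (du (du N) p + dv (dv N) p).
Proof.
  intros H. rewrite !dzbdz in H. unfold Cmult, RtoC in H; simpl in H. injection H. intros H1 H2. nra.
Qed.

Lemma schwarz_C2 Om f p : open Om -> C2_on Om f -> Om p -> dv (du f) p = du (dv f) p.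
Proof.
  intros HO [H0 [Hu Hv]] Hp. destruct p as [x y].
  symmetry. apply (Schwarz (fun u v => f (u, v)) x y).
  - apply locally_2d_locally. apply (filter_imp Om). intros [u v] Hz. simpl.
    split; [|split; [|split]].
    + apply (C1_exu Om f (u, v)); auto.
    + apply (C1_exv Om f (u, v)); auto.
    + apply (C1_exu Om (dv f) (u, v)); auto.
    + apply (C1_exv Om (du f) (u, v)); auto.
    + apply HO, Hp.
  - apply (cont_2d (du (dv f))). apply (C1_cont_du Om); auto.
  - apply (cont_2d (dv (du f))). apply (C1_cont_dv Om); auto.
Qed.

Section Main.
Variables (Om : pt -> Prop) (h : pt -> C) (M N : pt -> R).
Hypothesis HO : open Om.
Hypothesis HW : weierstrass_data_2 Om h M N.

Lemma Ca : C1_on Om (fun q => Re (h q)). Proof. destruct HW as [[[H _] _] _]. exact H. Qed.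
Lemma Cb : C1_on Om (fun q => Im (h q)). Proof. destruct HW as [[_ [H _]] _]. exact H. Qed.
Lemma CM2 : C2_on Om M. Proof. apply HW. Qed.
Lemma CN2 : C2_on Om N. Proof. apply HW. Qed.
Lemma CM : C1_on Om M. Proof. apply CM2. Qed.
Lemma CN : C1_on Om N. Proof. apply CN2. Qed.
Lemma CMu : C1_on Om (du M). Proof. apply CM2. Qed.
Lemma CMv : C1_on Om (dv M). Proof. apply CM2. Qed.
Lemma CNu : C1_on Om (du N). Proof. apply CN2. Qed.
Lemma CNv : C1_on Om (dv N). Proof. apply CN2. Qed.

Definition P2 (q : pt) : R := - dv M q + Re (h q) * dv N q - Im (h q) * du N q.
Definition Q2 (q : pt) : R := du M q - Re (h q) * du N q - Im (h q) * dv N q.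
Definition al (q : pt) : R := /2 * (1 + Re (h q) * Re (h q) - Im (h q) * Im (h q)).
Definition be (q : pt) : R := Re (h q) * Im (h q).
Definition P3 (q : pt) : R := - (Re (h q) * du M q + Im (h q) * dv M q) + al q * du N q + be q * dv N q.
Definition Q3 (q : pt) : R := Im (h q) * du M q - Re (h q) * dv M q - be q * du N q + al q * dv N q.

Ltac c1tac0 := repeat match goal with
  | |- C1_on _ (fun q => _ + _) => apply C1_plus; [exact HO| |]
  | |- C1_on _ (fun q => _ - _) => apply C1_minus; [exact HO| |]
  | |- C1_on _ (fun q => _ * _) => apply C1_mult; [exact HO| |]
  | |- C1_on _ (fun q => - _) => apply C1_opp; [exact HO|]
  | |- C1_on _ (fun _ => / 2) => apply C1_const; exact HO
  | |- C1_on _ (fun _ => 1) => apply C1_const; exact HO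
  | |- C1_on _ (fun q => Re (h q)) => exact Ca
  | |- C1_on _ (fun q => Im (h q)) => exact Cb
  | |- C1_on _ (du M) => exact CMu
  | |- C1_on _ (dv M) => exact CMv
  | |- C1_on _ (du N) => exact CNu
  | |- C1_on _ (dv N) => exact CNv
  | |- C1_on _ (fun q => du M q) => exact CMu
  | |- C1_on _ (fun q => dv M q) => exact CMv
  | |- C1_on _ (fun q => du N q) => exact CNu
  | |- C1_on _ (fun q => dv N q) => exact CNv
  end.

Lemma C1al : C1_on Om al. Proof. unfold al. c1tac0. Qed.
Lemma C1be : C1_on Om be. Proof. unfold be. c1tac0. Qed.

Ltac c1tac := repeat match goal with
  | |- C1_on _ (fun q => _ + _) => apply C1_plus; [exact HO| |]
  | |- C1_on _ (fun q => _ - _) => apply C1_minus; [exact HO| |]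
  | |- C1_on _ (fun q => _ * _) => apply C1_mult; [exact HO| |]
  | |- C1_on _ (fun q => - _) => apply C1_opp; [exact HO|]
  | |- C1_on _ (fun _ => / 2) => apply C1_const; exact HO
  | |- C1_on _ (fun _ => 1) => apply C1_const; exact HO
  | |- C1_on _ (fun q => Re (h q)) => exact Ca
  | |- C1_on _ (fun q => Im (h q)) => exact Cb
  | |- C1_on _ (du M) => exact CMu
  | |- C1_on _ (dv M) => exact CMv
  | |- C1_on _ (du N) => exact CNu
  | |- C1_on _ (dv N) => exact CNv
  | |- C1_on _ (fun q => du M q) => exact CMu
  | |- C1_on _ (fun q => dv M q) => exact CMv
  | |- C1_on _ (fun q => du N q) => exact CNu
  | |- C1_on _ (fun q => dv N q) => exact CNv
  | |- C1_on _ (fun q => al q) => exact C1al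
  | |- C1_on _ (fun q => be q) => exact C1be
  | |- C1_on _ al => exact C1al
  | |- C1_on _ be => exact C1be
  end.

Lemma C1P2 : C1_on Om P2. Proof. unfold P2. c1tac. Qed.
Lemma C1Q2 : C1_on Om Q2. Proof. unfold Q2. c1tac. Qed.
Lemma C1P3 : C1_on Om P3. Proof. unfold P3. c1tac. Qed.
Lemma C1Q3 : C1_on Om Q3. Proof. unfold Q3. c1tac. Qed.


Section Pt.
Variable p : pt.
Hypothesis Hp : Om p.

Lemma exs : exu (fun q => Re (h q)) p /\ exv (fun q => Re (h q)) p /\ exu (fun q => Im (h q)) p /\ exv (fun q => Im (h q)) p /\
  exu M p /\ exv M p /\ exu N p /\ exv N p /\ exu (du M) p /\ exv (du M) p /\ exu (dv M) p /\ exv (dv M) p /\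
  exu (du N) p /\ exv (du N) p /\ exu (dv N) p /\ exv (dv N) p.
Proof.
  split; [exact (C1_exu Om _ p Ca Hp)|].
  split; [exact (C1_exv Om _ p Ca Hp)|].
  split; [exact (C1_exu Om _ p Cb Hp)|].
  split; [exact (C1_exv Om _ p Cb Hp)|].
  split; [exact (C1_exu Om _ p CM Hp)|].
  split; [exact (C1_exv Om _ p CM Hp)|].
  split; [exact (C1_exu Om _ p CN Hp)|].
  split; [exact (C1_exv Om _ p CN Hp)|].
  split; [exact (C1_exu Om _ p CMu Hp)|].
  split; [exact (C1_exv Om _ p CMu Hp)|].
  split; [exact (C1_exu Om _ p CMv Hp)|].
  split; [exact (C1_exv Om _ p CMv Hp)|].
  split; [exact (C1_exu Om _ p CNu Hp)|].
  split; [exact (C1_exv Om _ p CNu Hp)|].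
  split; [exact (C1_exu Om _ p CNv Hp)|].
  exact (C1_exv Om _ p CNv Hp).
Qed.

Ltac getex := destruct exs as [Ea1 [Ea2 [Eb1 [Eb2 [EM1 [EM2 [EN1 [EN2 [EMu1 [EMu2 [EMv1 [EMv2 [ENu1 [ENu2 [ENv1 ENv2]]]]]]]]]]]]]]].

Ltac drw := repeat first [ rewrite dv_minus by auto 30 with exd | rewrite dv_plus by auto 30 with exd
  | rewrite dv_mult by auto 30 with exd | rewrite dv_opp | rewrite du_minus by auto 30 with exd
  | rewrite du_plus by auto 30 with exd | rewrite du_mult by auto 30 with exd | rewrite du_opp
  | rewrite du_const | rewrite dv_const ].

Lemma rels : du (fun q => Re (h q)) p = dv (fun q => Im (h q)) p /\
  du (fun q => Im (h q)) p = - dv (fun q => Re (h q)) p /\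
  dv (du M) p = du (dv M) p /\ dv (du N) p = du (dv N) p /\
  du (du M) p = Re (h p) * (du (du N) p + dv (dv N) p) - dv (dv M) p.
Proof.
  destruct HW as [_ [_ [_ [_ [Hh [HL _]]]]]].
  destruct (CR_of h p (Hh p Hp)) as [C1 C2].
  pose proof (Lap_of M N (Re (h p)) p (HL p Hp)) as L.
  split; [|split; [|split; [|split]]]; auto.
  apply schwarz_C2 with Om; auto. exact CM2.
  apply schwarz_C2 with Om; auto. exact CN2.
  lra.
Qed.

Ltac getrel := destruct rels as [R1 [R2 [R3 [R4 R5]]]].

Lemma clos2 : dv P2 p = du Q2 p.
Proof. getex. getrel. unfold P2, Q2. drw. rewrite ?R1, ?R2, ?R3, ?R4, ?R5. ring. Qed.

Lemma clos3 : dv P3 p = du Q3 p.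
Proof. getex. getrel. unfold P3, Q3, al, be. drw. rewrite ?R1, ?R2, ?R3, ?R4, ?R5. field. Qed.

Lemma lap2 : du P2 p + dv Q2 p = - Im (h p) * (du (du N) p + dv (dv N) p).
Proof. getex. getrel. unfold P2, Q2. drw. rewrite ?R1, ?R2, ?R3, ?R4, ?R5. ring. Qed.

Lemma lap3 : du P3 p + dv Q3 p = /2 * (1 - Re (h p) * Re (h p) - Im (h p) * Im (h p)) * (du (du N) p + dv (dv N) p).
Proof. getex. getrel. unfold P3, Q3, al, be. drw. rewrite ?R1, ?R2, ?R3, ?R4, ?R5. field. Qed.

End Pt.

Variables x2 x3 : pt -> R.
Hypothesis Hx2 : forall q, Om q -> is_derive (fun t => x2 (t, snd q)) (fst q) (P2 q) /\ is_derive (fun t => x2 (fst q, t)) (snd q) (Q2 q).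
Hypothesis Hx3 : forall q, Om q -> is_derive (fun t => x3 (t, snd q)) (fst q) (P3 q) /\ is_derive (fun t => x3 (fst q, t)) (snd q) (Q3 q).

Definition x4 (q : pt) : R := N q - x3 q.
Definition P4 (q : pt) : R := du N q - P3 q.
Definition Q4 (q : pt) : R := dv N q - Q3 q.

Lemma Hx4 : forall q, Om q -> is_derive (fun t => x4 (t, snd q)) (fst q) (P4 q) /\ is_derive (fun t => x4 (fst q, t)) (snd q) (Q4 q).
Proof.
  intros q Hq. unfold x4, P4, Q4. split.
  - apply (isd_minus (fun t => N (t, snd q)) (fun t => x3 (t, snd q))). apply Derive_correct. exact (C1_exu Om _ q CN Hq). apply Hx3, Hq.
  - apply (isd_minus (fun t => N (fst q, t)) (fun t => x3 (fst q, t))). apply Derive_correct. exact (C1_exv Om _ q CN Hq). apply Hx3, Hq.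
Qed.

Lemma Eu2 : eqOn Om (du x2) P2. Proof. intros q Hq. apply is_derive_unique, Hx2, Hq. Qed.
Lemma Ev2 : eqOn Om (dv x2) Q2. Proof. intros q Hq. apply is_derive_unique, Hx2, Hq. Qed.
Lemma Eu3 : eqOn Om (du x3) P3. Proof. intros q Hq. apply is_derive_unique, Hx3, Hq. Qed.
Lemma Ev3 : eqOn Om (dv x3) Q3. Proof. intros q Hq. apply is_derive_unique, Hx3, Hq. Qed.
Lemma Eu4 : eqOn Om (du x4) P4. Proof. intros q Hq. apply is_derive_unique, Hx4, Hq. Qed.
Lemma Ev4 : eqOn Om (dv x4) Q4. Proof. intros q Hq. apply is_derive_unique, Hx4, Hq. Qed.

Lemma Xz_eq p : Om p -> Xz M x2 x3 x4 p = WRep h M N p.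
Proof.
  intros Hp. unfold Xz, WRep. rewrite !dz_rc.
  rewrite (Eu2 p Hp), (Ev2 p Hp), (Eu3 p Hp), (Ev3 p Hp), (Eu4 p Hp), (Ev4 p Hp).
  unfold P4, Q4, P2, Q2, P3, Q3, al, be.
  destruct (h p) as [a b].
  unfold cadd4, cscale4, Cmult, Cplus, Cminus, Copp, Ci, RtoC, Re, Im; simpl.
  repeat apply injective_projections; simpl; field.
Qed.


Lemma Lam_eq p : Om p -> Lambda M x2 x3 x4 p =
  4 * (Cmod (Cminus (dz (rc M) p) (Cmult (RtoC (Re (h p))) (dz (rc N) p)))) ^ 2.
Proof.
  intros Hp. unfold Lambda. rewrite Xz_eq by auto. unfold WRep. rewrite !dz_rc.
  destruct (h p) as [a b]. unfold Cmod. rewrite pow2_sqrt.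
  - unfold lor, conj4, cadd4, cscale4, Cconj, Cmult, Cplus, Cminus, Copp, Ci, RtoC, Re, Im; simpl. field.
  - pose proof (pow2_ge_0 (fst (Cminus (/ 2 * du M p, - (/ 2 * dv M p)) (Cmult (RtoC (Re (a, b))) (/ 2 * du N p, - (/ 2 * dv N p)))))).
    pose proof (pow2_ge_0 (snd (Cminus (/ 2 * du M p, - (/ 2 * dv M p)) (Cmult (RtoC (Re (a, b))) (/ 2 * du N p, - (/ 2 * dv N p)))))).
    lra.
Qed.

Lemma C1P4 : C1_on Om P4. Proof. unfold P4. apply C1_minus; auto. exact CNu. exact C1P3. Qed.
Lemma C1Q4 : C1_on Om Q4. Proof. unfold Q4. apply C1_minus; auto. exact CNv. exact C1Q3. Qed.

Lemma conf : conformal_spacelike_immersion Om M x2 x3 x4.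
Proof.
  split; [exact CM2|]. split; [apply (pot_C2 Om x2 P2 Q2 HO Hx2 C1P2 C1Q2)|].
  split; [apply (pot_C2 Om x3 P3 Q3 HO Hx3 C1P3 C1Q3)|].
  split; [apply (pot_C2 Om x4 P4 Q4 HO Hx4 C1P4 C1Q4)|].
  intros p Hp. split; [|split].
  - rewrite Xz_eq by auto. unfold WRep. rewrite !dz_rc. destruct (h p) as [a b].
    unfold lor, conj4, cadd4, cscale4, Cconj, Cmult, Cplus, Cminus, Copp, Ci, RtoC, Re, Im; simpl.
    apply injective_projections; simpl; field.
  - rewrite Xz_eq by auto. unfold WRep. rewrite !dz_rc. destruct (h p) as [a b].
    unfold lor, conj4, cadd4, cscale4, Cconj, Cmult, Cplus, Cminus, Copp, Ci, RtoC, Re, Im; simpl. field.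
  - rewrite Lam_eq by auto. destruct HW as [_ [_ [_ [_ [_ [_ Hnz]]]]]].
    pose proof (proj1 (Cmod_gt_0 _) (Hnz p Hp)). nra.
Qed.


Lemma dzbdz_pot x Pf Qf p : eqOn Om (du x) Pf -> eqOn Om (dv x) Qf -> Om p ->
  dzb (dz (rc x)) p = (/4 * (du Pf p + dv Qf p), /4 * (dv Pf p - du Qf p)).
Proof.
  intros E1 E2 Hp. rewrite dzbdz.
  rewrite (eqOn_du Om _ _ HO E1 p Hp), (eqOn_dv Om _ _ HO E2 p Hp), (eqOn_dv Om _ _ HO E1 p Hp), (eqOn_du Om _ _ HO E2 p Hp).
  reflexivity.
Qed.

Lemma mtrap : marginally_trapped Om M x2 x3 x4.
Proof.
  intros p Hp. unfold Hmean, Xzzb.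
  rewrite (dzbdz_pot x2 P2 Q2 p Eu2 Ev2 Hp), (dzbdz_pot x3 P3 Q3 p Eu3 Ev3 Hp), (dzbdz_pot x4 P4 Q4 p Eu4 Ev4 Hp), dzbdz.
  assert (EP4 : du P4 p = du (du N) p - du P3 p).
  { unfold P4. apply du_minus. exact (C1_exu Om _ p CNu Hp). exact (C1_exu Om _ p C1P3 Hp). }
  assert (EQ4 : dv Q4 p = dv (dv N) p - dv Q3 p).
  { unfold Q4. apply dv_minus. exact (C1_exv Om _ p CNv Hp). exact (C1_exv Om _ p C1Q3 Hp). }
  assert (EP4' : dv P4 p = dv (du N) p - dv P3 p).
  { unfold P4. apply dv_minus. exact (C1_exv Om _ p CNu Hp). exact (C1_exv Om _ p C1P3 Hp). }
  assert (EQ4' : du Q4 p = du (dv N) p - du Q3 p).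
  { unfold Q4. apply du_minus. exact (C1_exu Om _ p CNv Hp). exact (C1_exu Om _ p C1Q3 Hp). }
  rewrite EP4, EQ4, EP4', EQ4'.
  destruct (rels p Hp) as [R1 [R2 [R3 [R4 R5]]]].
  pose proof (clos2 p Hp) as K2. pose proof (clos3 p Hp) as K3.
  pose proof (lap2 p Hp) as L2. pose proof (lap3 p Hp) as L3.
  assert (L2' : du P2 p = - Im (h p) * (du (du N) p + dv (dv N) p) - dv Q2 p) by lra.
  assert (L3' : du P3 p = / 2 * (1 - Re (h p) * Re (h p) - Im (h p) * Im (h p)) * (du (du N) p + dv (dv N) p) - dv Q3 p) by lra.
  rewrite L2', L3', K2, K3, R3, R4, R5.
  set (k := 4 / Lambda M x2 x3 x4 p).
  unfold lor, cscale4, Cmult, Cplus, Cminus, Copp, RtoC; simpl.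
  apply injective_projections; simpl; field.
Qed.


Lemma uniq_one y x : path_connected Om -> has_partials_on Om y -> has_partials_on Om x ->
  (forall p, Om p -> dz (rc y) p = dz (rc x) p) -> exists c, forall p, Om p -> y p = x p + c.
Proof.
  intros PC Hy Hx E. pose proof PC as [[p0 Hp0] _].
  exists (y p0 - x p0). intros p Hp.
  assert (K : (fun q => y q - x q) p = (fun q => y q - x q) p0).
  { apply (const_on Om (fun q => y q - x q)); auto. intros q Hq.
    pose proof (E q Hq) as Eq. rewrite !dz_rc in Eq. injection Eq. intros E2 E1.
    destruct (Hy q Hq) as [Yu Yv]. destruct (Hx q Hq) as [Xu Xv].
    split.
    - replace 0 with (du y q - du x q) by lra.
      apply (isd_minus (fun t => y (t, snd q)) (fun t => x (t, snd q))); apply Derive_correct; auto.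
    - replace 0 with (dv y q - dv x q) by lra.
      apply (isd_minus (fun t => y (fst q, t)) (fun t => x (fst q, t))); apply Derive_correct; auto. }
  simpl in K. lra.
Qed.

Lemma hp_of_deriv x Pf Qf : (forall q, Om q -> is_derive (fun t => x (t, snd q)) (fst q) (Pf q) /\ is_derive (fun t => x (fst q, t)) (snd q) (Qf q)) ->
  has_partials_on Om x.
Proof. intros H q Hq. split; eexists; apply H; auto. Qed.

Lemma uniq4 : path_connected Om ->
  forall y1 y2 y3 y4 : pt -> R,
       has_partials_on Om y1 -> has_partials_on Om y2 ->
       has_partials_on Om y3 -> has_partials_on Om y4 ->
       (forall p, Om p -> Xz y1 y2 y3 y4 p = WRep h M N p) ->
       exists c1 c2 c3 c4 : R, forall p, Om p ->
         y1 p = M p + c1 /\ y2 p = x2 p + c2 /\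
         y3 p = x3 p + c3 /\ y4 p = x4 p + c4.
Proof.
  intros PC y1 y2 y3 y4 H1 H2 H3 H4 E.
  assert (E' : forall p, Om p -> Xz y1 y2 y3 y4 p = Xz M x2 x3 x4 p) by (intros; rewrite E, Xz_eq; auto).
  destruct (uniq_one y1 M PC H1 (proj1 CM)) as [c1 K1].
  { intros p Hp. exact (f_equal (fun t => fst (fst (fst t))) (E' p Hp)). }
  destruct (uniq_one y2 x2 PC H2 (hp_of_deriv x2 P2 Q2 Hx2)) as [c2 K2].
  { intros p Hp. exact (f_equal (fun t => snd (fst (fst t))) (E' p Hp)). }
  destruct (uniq_one y3 x3 PC H3 (hp_of_deriv x3 P3 Q3 Hx3)) as [c3 K3].
  { intros p Hp. exact (f_equal (fun t => snd (fst t)) (E' p Hp)). }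
  destruct (uniq_one y4 x4 PC H4 (hp_of_deriv x4 P4 Q4 Hx4)) as [c4 K4].
  { intros p Hp. exact (f_equal (fun t => snd t) (E' p Hp)). }
  exists c1, c2, c3, c4. intros p Hp. auto.
Qed.

End Main.

Theorem mainTheorem6 (Om : pt -> Prop) (h : pt -> C) (M N : pt -> R) :
  simply_connected_domain Om ->
  weierstrass_data_2 Om h M N ->
  exists x1 x2 x3 x4 : pt -> R,
    (* X_z given by the Weierstrass representation *)
    (forall p, Om p -> Xz x1 x2 x3 x4 p = WRep h M N p) /\
    (* uniqueness up to an additive constant vector *)
    (forall y1 y2 y3 y4 : pt -> R,
       has_partials_on Om y1 -> has_partials_on Om y2 ->
       has_partials_on Om y3 -> has_partials_on Om y4 ->
       (forall p, Om p -> Xz y1 y2 y3 y4 p = WRep h M N p) ->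
       exists c1 c2 c3 c4 : R, forall p, Om p ->
         y1 p = x1 p + c1 /\ y2 p = x2 p + c2 /\
         y3 p = x3 p + c3 /\ y4 p = x4 p + c4) /\
    conformal_spacelike_immersion Om x1 x2 x3 x4 /\
    marginally_trapped Om x1 x2 x3 x4 /\
    (* ds^2 = Λ |dz|^2 with Λ = 4 |M_z - (Re h) N_z|^2 *)
    (forall p, Om p ->
       Lambda x1 x2 x3 x4 p =
       4 * (Cmod (Cminus (dz (rc M) p) (Cmult (RtoC (Re (h p))) (dz (rc N) p)))) ^ 2) /\
    (* x1 = M and x3 + x4 = N up to additive constants *)
    (exists a b : R, forall p, Om p ->
       x1 p = M p + a /\ x3 p + x4 p = N p + b).
Proof.
  intros [HO HSC] HW.
  pose proof (C1P2 Om h M N HO HW) as CP2. pose proof (C1Q2 Om h M N HO HW) as CQ2.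
  pose proof (C1P3 Om h M N HO HW) as CP3. pose proof (C1Q3 Om h M N HO HW) as CQ3.
  destruct (poincare Om (P2 h M N) (Q2 h M N) HO HSC) as [x2 Hx2].
  { intros p Hp. split; [|split]. eapply C1_cont; eauto. eapply C1_cont; eauto. eapply C1_cont_du; eauto. }
  { intros p Hp. split. exact (C1_exu Om _ p CQ2 Hp). exact (C1_exv Om _ p CP2 Hp). }
  { intros p Hp. eapply clos2; eauto. }
  destruct (poincare Om (P3 h M N) (Q3 h M N) HO HSC) as [x3 Hx3].
  { intros p Hp. split; [|split]. eapply C1_cont; eauto. eapply C1_cont; eauto. eapply C1_cont_du; eauto. }
  { intros p Hp. split. exact (C1_exu Om _ p CQ3 Hp). exact (C1_exv Om _ p CP3 Hp). }
  { intros p Hp. eapply clos3; eauto. }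
  exists M, x2, x3, (x4 N x3).
  split; [|split; [|split; [|split; [|split]]]].
  - intros p Hp. eapply Xz_eq; eauto.
  - eapply uniq4; eauto. apply HSC.
  - eapply conf; eauto.
  - eapply mtrap; eauto.
  - intros p Hp. eapply Lam_eq; eauto.
  - exists 0, 0. intros p Hp. unfold x4. split; ring.
Qed.
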